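(* Let $\varphi(z)=1+B_1z+B_2z^2+B_3z^3+\cdots$ be analytic in $\mathbb{D}$ with $B_1>0$ and $B_2\in\mathbb{R}$. Let $f(z)=z+\sum_{n\ge2}a_nz^n$ belong to $\sigma$, with inverse $F=f^{-1}$ on $\mathbb{D}$, and suppose \[\frac{zf'(z)}{f(z)}\prec\varphi(z)\quad\text{and}\quad F'(w)\prec\varphi(w)\] (i.e. $f\in\mathcal{S}^*(\varphi)$ and $F\in\mathcal{R}(\varphi)$). Then \[|a_2|\le\frac{\sqrt{5\,(B_1+|B_2-B_1|)}}{3}\quad\text{and}\quad |a_3|\le\frac{7\,(B_1+|B_2-B_1|)}{9}.\]
   Context: $\mathbb{D}=\{z\in\mathbb{C}:|z|<1\}$. $\mathcal{A}$ denotes the class of analytic functions $f$ on $\mathbb{D}$ with $f(0)=0$, $f'(0)=1$, i.e. $f(z)=z+\sum_{n\ge2}a_nz^n$. The class $\sigma$ of bi-univalent functions consists of those $f\in\mathcal{A}$ that are univalent in $\mathbb{D}$ and whose inverse $f^{-1}$ (defined near $0$) extends to a univalent analytic function $F$ on $\mathbb{D}$; then $F(w)=w-a_2w^2+(2a_2^2-a_3)w^3+\cdots$. For analytic $g,h$ on $\mathbb{D}$, $g\prec h$ (subordination) means there is an analytic $\omega:\mathbb{D}\to\mathbb{D}$ with $\omega(0)=0$ and $g=h\circ\omega$. *)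

(* Defs.v *)
From Stdlib Require Import Reals.
Open Scope R_scope.

Record Cplx : Type := mkC { Re : R ; Im : R }.

Definition RtoC (x : R) : Cplx := mkC x 0.
Definition Czero : Cplx := RtoC 0.
Definition Cone : Cplx := RtoC 1.
Definition Cadd (z w : Cplx) : Cplx := mkC (Re z + Re w) (Im z + Im w).
Definition Copp (z : Cplx) : Cplx := mkC (- Re z) (- Im z).
Definition Csub (z w : Cplx) : Cplx := Cadd z (Copp w).
Definition Cmul (z w : Cplx) : Cplx :=
  mkC (Re z * Re w - Im z * Im w) (Re z * Im w + Im z * Re w).
Definition Cinv (z : Cplx) : Cplx :=
  mkC (Re z / (Re z * Re z + Im z * Im z)) (- Im z / (Re z * Re z + Im z * Im z)).
Definition Cdiv (z w : Cplx) : Cplx := Cmul z (Cinv w).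
Definition Cnorm (z : Cplx) : R := sqrt (Re z * Re z + Im z * Im z).
Fixpoint Cpow (z : Cplx) (n : nat) : Cplx :=
  match n with O => Cone | S m => Cmul z (Cpow z m) end.

Definition Ceq_dec (z w : Cplx) : {z = w} + {z <> w}.
Proof.
  destruct z as [a b], w as [c d].
  destruct (Req_EM_T a c) as [H1|H1]; destruct (Req_EM_T b d) as [H2|H2].
  - left; subst; reflexivity.
  - right; intro H; inversion H; auto.
  - right; intro H; inversion H; auto.
  - right; intro H; inversion H; auto.
Defined.

Definition inD (z : Cplx) : Prop := Cnorm z < 1.

Definition is_cderiv (f : Cplx -> Cplx) (z L : Cplx) : Prop :=
  forall eps : R, 0 < eps -> exists delta : R, 0 < delta /\
    forall h : Cplx, h <> Czero -> Cnorm h < delta ->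
      Cnorm (Csub (Cdiv (Csub (f (Cadd z h)) (f z)) h) L) < eps.

Definition analytic_D (f : Cplx -> Cplx) : Prop :=
  forall z, inD z -> exists L, is_cderiv f z L.

Fixpoint Cpsum (c : nat -> Cplx) (z : Cplx) (n : nat) : Cplx :=
  match n with
  | O => c O
  | S m => Cadd (Cpsum c z m) (Cmul (c (S m)) (Cpow z (S m)))
  end.

Definition has_series (c : nat -> Cplx) (f : Cplx -> Cplx) : Prop :=
  forall z, inD z ->
    forall eps : R, 0 < eps -> exists N : nat, forall n : nat, (n >= N)%nat ->
      Cnorm (Csub (Cpsum c z n) (f z)) < eps.

Definition univalent_D (f : Cplx -> Cplx) : Prop :=
  forall z w, inD z -> inD w -> f z = f w -> z = w.

Definition subordinate (g h : Cplx -> Cplx) : Prop :=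
  exists omega : Cplx -> Cplx,
    analytic_D omega /\ (forall z, inD z -> inD (omega z)) /\ omega Czero = Czero /\
    (forall z, inD z -> g z = h (omega z)).

(** f in A with Taylor coefficients a (a_0 = 0, a_1 = 1), univalent on D,
    and F analytic univalent on D extending the local inverse f^{-1} near 0. *)
Definition bi_univalent_with (a : nat -> Cplx) (f F : Cplx -> Cplx) : Prop :=
  has_series a f /\ a O = Czero /\ a 1%nat = Cone /\
  univalent_D f /\
  analytic_D F /\ univalent_D F /\
  exists r : R, 0 < r /\
    forall w, Cnorm w < r -> inD (F w) /\ f (F w) = w.

(** z f'(z)/f(z), with its removable value 1 at z = 0. *)
Definition starlike_quot (f df : Cplx -> Cplx) (z : Cplx) : Cplx :=
  if Ceq_dec z Czero then Cone else Cdiv (Cmul z (df z)) (f z).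

(* Main.v *)
From Stdlib Require Import Reals Lra Lia.
From Coquelicot Require Import Coquelicot.
Open Scope R_scope.

Notation C0 := (RtoC 0).
Notation C1 := (RtoC 1).

Definition E (t : R) : C := (cos t, sin t).

Lemma C_eq (x y : C) : fst x = fst y -> snd x = snd y -> x = y.
Proof. destruct x, y; simpl; intros; subst; auto. Qed.

Lemma Cmod_E t : Cmod (E t) = 1.
Proof. unfold Cmod, E; simpl. pose proof (sin2_cos2 t). unfold Rsqr in H.
  replace (cos t * (cos t * 1) + sin t * (sin t * 1)) with 1 by lra. apply sqrt_1. Qed.

Lemma E_add s t : E (s + t) = (E s * E t)%C.
Proof. apply C_eq; simpl; [rewrite cos_plus | rewrite sin_plus]; ring. Qed.

Lemma E_0 : E 0 = 1%C.
Proof. apply C_eq; simpl; [rewrite cos_0|rewrite sin_0]; auto. Qed.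

Lemma E_2PI : E (2*PI) = 1%C.
Proof. apply C_eq; simpl; [rewrite cos_2PI|rewrite sin_2PI]; auto. Qed.

Lemma E_opp t : (E t * E (-t))%C = 1%C.
Proof. rewrite <- E_add. replace (t + - t) with 0 by ring. apply E_0. Qed.

Lemma E_nat n t : E (INR n * t) = (E t ^ n)%C.
Proof.
  induction n.
  - simpl. replace (0 * t) with 0 by ring. apply E_0.
  - rewrite S_INR. simpl Cpow. replace ((INR n + 1) * t) with (t + INR n * t) by ring.
    rewrite E_add, IHn. reflexivity.
Qed.

Lemma E_2PI_nat n : E (INR n * (2*PI)) = 1%C.
Proof. rewrite E_nat, E_2PI. induction n; simpl; auto. rewrite IHn. apply C_eq; simpl; ring. Qed.

Lemma Cmod_le_sum (x : C) : Cmod x <= Rabs (fst x) + Rabs (snd x).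
Proof.
  unfold Cmod. apply Rsqr_incr_0_var. 2: pose proof (Rabs_pos (fst x)); pose proof (Rabs_pos (snd x)); lra.
  rewrite Rsqr_sqrt. 2: nra. unfold Rsqr. simpl.
  pose proof (Rabs_pos (fst x)); pose proof (Rabs_pos (snd x)).
  replace (fst x * (fst x * 1) + snd x * (snd x * 1)) with (Rabs (fst x) * Rabs (fst x) + Rabs (snd x)* Rabs (snd x)).
  nra. rewrite <- !Rabs_mult. rewrite !Rabs_right; try ring; nra.
Qed.

Lemma cos_lip s t : Rabs (cos t - cos s) <= Rabs (t - s).
Proof.
  destruct (MVT_abs cos (fun x => - sin x) s t) as [c [Hc _]].
  { intros; apply derivable_pt_lim_cos. }
  rewrite Hc. rewrite Rabs_Ropp. pose proof (SIN_bound c).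
  assert (Rabs (sin c) <= 1) by (apply Rabs_le; lra).
  pose proof (Rabs_pos (t - s)). nra.
Qed.

Lemma sin_lip s t : Rabs (sin t - sin s) <= Rabs (t - s).
Proof.
  destruct (MVT_abs sin cos s t) as [c [Hc _]].
  { intros; apply derivable_pt_lim_sin. }
  rewrite Hc. pose proof (COS_bound c).
  assert (Rabs (cos c) <= 1) by (apply Rabs_le; lra).
  pose proof (Rabs_pos (t - s)). nra.
Qed.

Lemma E_lip s t : Cmod (E t - E s) <= 2 * Rabs (t - s).
Proof.
  eapply Rle_trans. apply Cmod_le_sum. simpl.
  pose proof (cos_lip s t). pose proof (sin_lip s t).
  replace (cos t + - cos s) with (cos t - cos s) by ring.
  replace (sin t + - sin s) with (sin t - sin s) by ring. lra.
Qed.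

Definition Small (g : C -> C) : Prop :=
  forall eps, 0 < eps -> exists delta, 0 < delta /\
    forall k, Cmod k < delta -> Cmod (g k) <= eps * Cmod k.

Definition Bnd (c : C -> C) : Prop :=
  exists delta M, 0 < delta /\ forall k, Cmod k < delta -> Cmod (c k) <= M.

Definition Dq (q : C -> C) (z L : C) : Prop :=
  Small (fun k => q (z + k) - q z - L * k)%C.

Lemma Cmod_minus_le (x y : C) : Cmod (x - y) <= Cmod x + Cmod y.
Proof. eapply Rle_trans. apply Cmod_triangle. rewrite Cmod_opp. lra. Qed.

Lemma S_ext g h : (forall k, g k = h k) -> Small g -> Small h.
Proof. intros E H eps he. destruct (H eps he) as [d [hd Hd]]. exists d; split; auto.
  intros k hk; rewrite <- E; auto. Qed.

Lemma S_plus g h : Small g -> Small h -> Small (fun k => g k + h k)%C.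
Proof.
  intros Hg Hh eps he. destruct (Hg (eps/2)) as [d1 [h1 H1]]; [lra|].
  destruct (Hh (eps/2)) as [d2 [h2 H2]]; [lra|].
  exists (Rmin d1 d2); split; [apply Rmin_glb_lt; auto|].
  intros k hk. eapply Rle_trans. apply Cmod_triangle.
  pose proof (H1 k (Rlt_le_trans _ _ _ hk (Rmin_l _ _))).
  pose proof (H2 k (Rlt_le_trans _ _ _ hk (Rmin_r _ _))). lra.
Qed.

Lemma S_opp g : Small g -> Small (fun k => - g k)%C.
Proof. intros H eps he. destruct (H eps he) as [d [hd Hd]]. exists d; split; auto.
  intros k hk; rewrite Cmod_opp; auto. Qed.

Lemma S_mul g c : Bnd c -> Small g -> Small (fun k => c k * g k)%C.
Proof.
  intros [d0 [M [hd0 HM]]] Hg eps he.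
  assert (hM : 0 <= M). { specialize (HM C0). rewrite Cmod_0 in HM.
    pose proof (Cmod_ge_0 (c C0)). assert (HH: Cmod (c C0) <= M) by (apply HM; lra). lra. }
  destruct (Hg (eps / (M+1))) as [d1 [h1 H1]]. apply Rdiv_lt_0_compat; lra.
  exists (Rmin d0 d1); split; [apply Rmin_glb_lt; auto|].
  intros k hk. rewrite Cmod_mult.
  pose proof (HM k (Rlt_le_trans _ _ _ hk (Rmin_l _ _))).
  pose proof (H1 k (Rlt_le_trans _ _ _ hk (Rmin_r _ _))).
  pose proof (Cmod_ge_0 (g k)). pose proof (Cmod_ge_0 k). pose proof (Cmod_ge_0 (c k)).
  apply Rle_trans with (M * (eps / (M + 1) * Cmod k)). apply Rmult_le_compat; auto.
  unfold Rdiv. rewrite <- Rmult_assoc. apply Rmult_le_compat_r; auto.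
  apply Rmult_le_reg_r with (M+1). lra. rewrite Rmult_assoc, Rmult_assoc, Rinv_l. nra. lra.
Qed.

Lemma S_quad g : (exists delta M, 0 < delta /\ forall k, Cmod k < delta -> Cmod (g k) <= M * Cmod k * Cmod k) -> Small g.
Proof.
  intros [d0 [M [hd0 HM]]] eps he.
  exists (Rmin d0 (eps / (Rabs M + 1))); split.
  apply Rmin_glb_lt; auto. apply Rdiv_lt_0_compat; auto. pose proof (Rabs_pos M); lra.
  intros k hk. pose proof (HM k (Rlt_le_trans _ _ _ hk (Rmin_l _ _))).
  pose proof (Rlt_le_trans _ _ _ hk (Rmin_r _ _)).
  pose proof (Cmod_ge_0 k). pose proof (Rabs_pos M). pose proof (Rle_abs M).
  assert (Cmod k * (Rabs M + 1) < eps).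
  { apply Rmult_lt_reg_r with (/(Rabs M + 1)). apply Rinv_0_lt_compat; lra.
    rewrite Rmult_assoc, Rinv_r by lra. lra. }
  nra.
Qed.

Lemma Bnd_const c : Bnd (fun _ => c).
Proof. exists 1, (Cmod c). split; [lra|]. intros; lra. Qed.

Lemma Bnd_plus c d : Bnd c -> Bnd d -> Bnd (fun k => c k + d k)%C.
Proof. intros [d1 [M1 [h1 H1]]] [d2 [M2 [h2 H2]]]. exists (Rmin d1 d2), (M1+M2).
  split. apply Rmin_glb_lt; auto. intros k hk. eapply Rle_trans. apply Cmod_triangle.
  pose proof (H1 k (Rlt_le_trans _ _ _ hk (Rmin_l _ _))).
  pose proof (H2 k (Rlt_le_trans _ _ _ hk (Rmin_r _ _))). lra. Qed.

Lemma Bnd_mul c d : Bnd c -> Bnd d -> Bnd (fun k => c k * d k)%C.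
Proof. intros [d1 [M1 [h1 H1]]] [d2 [M2 [h2 H2]]]. exists (Rmin d1 d2), (M1*M2).
  split. apply Rmin_glb_lt; auto. intros k hk. rewrite Cmod_mult.
  pose proof (H1 k (Rlt_le_trans _ _ _ hk (Rmin_l _ _))).
  pose proof (H2 k (Rlt_le_trans _ _ _ hk (Rmin_r _ _))).
  apply Rmult_le_compat; auto; apply Cmod_ge_0. Qed.

Lemma D_lip q z L : Dq q z L -> exists delta, 0 < delta /\
  forall k, Cmod k < delta -> Cmod (q (z + k) - q z)%C <= (Cmod L + 1) * Cmod k.
Proof.
  intros H. destruct (H 1) as [d [hd Hd]]; [lra|]. exists d; split; auto.
  intros k hk. specialize (Hd k hk).
  replace (q (z + k) - q z)%C with ((q (z + k) - q z - L * k) + L * k)%C by ring.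
  eapply Rle_trans. apply Cmod_triangle. rewrite Cmod_mult. lra.
Qed.

Lemma Bnd_D q z L : Dq q z L -> Bnd (fun k => q (z + k)%C).
Proof.
  intros H. destruct (D_lip q z L H) as [d [hd Hd]].
  exists (Rmin d 1), (Cmod (q z) + (Cmod L + 1)). split. apply Rmin_glb_lt; lra.
  intros k hk. pose proof (Hd k (Rlt_le_trans _ _ _ hk (Rmin_l _ _))).
  pose proof (Rlt_le_trans _ _ _ hk (Rmin_r _ _)).
  replace (q (z+k)%C) with (q z + (q (z+k) - q z))%C by ring.
  eapply Rle_trans. apply Cmod_triangle. pose proof (Cmod_ge_0 L). pose proof (Cmod_ge_0 k). nra.
Qed.

Lemma D_const c z : Dq (fun _ => c) z 0.
Proof. intros eps he. exists 1. split; [lra|]. intros k _.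
  replace (c - c - 0 * k)%C with C0 by ring. rewrite Cmod_0. pose proof (Cmod_ge_0 k); nra. Qed.

Lemma D_id z : Dq (fun w => w) z 1.
Proof. intros eps he. exists 1. split; [lra|]. intros k _.
  replace (z + k - z - 1 * k)%C with C0 by ring. rewrite Cmod_0. pose proof (Cmod_ge_0 k); nra. Qed.

Lemma D_plus q1 q2 z L1 L2 : Dq q1 z L1 -> Dq q2 z L2 -> Dq (fun w => q1 w + q2 w)%C z (L1 + L2)%C.
Proof. intros H1 H2. eapply S_ext; [|apply (S_plus _ _ H1 H2)]. intros k; simpl; ring. Qed.

Lemma D_opp q z L : Dq q z L -> Dq (fun w => - q w)%C z (- L)%C.
Proof. intros H. eapply S_ext; [|apply (S_opp _ H)]. intros k; simpl; ring. Qed.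

Lemma D_minus q1 q2 z L1 L2 : Dq q1 z L1 -> Dq q2 z L2 -> Dq (fun w => q1 w - q2 w)%C z (L1 - L2)%C.
Proof. intros H1 H2. apply (D_plus _ _ _ _ _ H1 (D_opp _ _ _ H2)). Qed.

Lemma D_mult q1 q2 z L1 L2 : Dq q1 z L1 -> Dq q2 z L2 ->
  Dq (fun w => q1 w * q2 w)%C z (L1 * q2 z + q1 z * L2)%C.
Proof.
  intros H1 H2.
  assert (Hq : Small (fun k => L1 * k * (q2 (z + k) - q2 z))%C).
  { apply S_quad. destruct (D_lip _ _ _ H2) as [d [hd Hd]]. exists d, (Cmod L1 * (Cmod L2 + 1)).
    split; auto. intros k hk. rewrite !Cmod_mult. pose proof (Hd k hk).
    pose proof (Cmod_ge_0 L1); pose proof (Cmod_ge_0 k).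
    replace (Cmod L1 * (Cmod L2 + 1) * Cmod k * Cmod k) with (Cmod L1 * Cmod k * ((Cmod L2 + 1) * Cmod k)) by ring.
    apply Rmult_le_compat_l; nra. }
  pose proof (S_mul _ _ (Bnd_D _ _ _ H2) H1) as A1.
  pose proof (S_mul _ _ (Bnd_const (q1 z)) H2) as A2.
  eapply S_ext; [|apply (S_plus _ _ (S_plus _ _ A1 A2) Hq)]. intros k; simpl; ring.
Qed.

Lemma D_scal c q z L : Dq q z L -> Dq (fun w => c * q w)%C z (c * L)%C.
Proof. intros H. eapply S_ext; [|apply (D_mult _ _ _ _ _ (D_const c z) H)]. intros k; simpl; ring. Qed.

Lemma D_pow n z : Dq (fun w => w ^ S n)%C z (INR (S n) * z ^ n)%C.
Proof.
  induction n.
  - eapply S_ext; [|apply (D_id z)]. intros k; simpl; ring.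
  - eapply S_ext; [|apply (D_mult _ _ _ _ _ (D_id z) IHn)]. intros k; cbv beta.
    replace (RtoC (INR (S (S n)))) with (RtoC (INR (S n)) + C1)%C by (rewrite (S_INR (S n)); apply C_eq; simpl; ring).
    change ((z+k) ^ S (S n))%C with ((z+k) * (z+k) ^ S n)%C.
    change (z ^ S (S n))%C with (z * z ^ S n)%C.
    change (z ^ S n)%C with (z * z ^ n)%C. ring.
Qed.

Lemma S_ext_loc g h d0 : 0 < d0 -> (forall k, Cmod k < d0 -> g k = h k) -> Small g -> Small h.
Proof. intros h0 E H eps he. destruct (H eps he) as [d [hd Hd]]. exists (Rmin d d0); split.
  apply Rmin_glb_lt; auto.
  intros k hk; rewrite <- E. apply Hd. eapply Rlt_le_trans. apply hk. apply Rmin_l.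
  eapply Rlt_le_trans. apply hk. apply Rmin_r. Qed.

Lemma D_inv q z L : Dq q z L -> q z <> C0 -> Dq (fun w => / q w)%C z (- L / (q z * q z))%C.
Proof.
  intros H hz.
  assert (hq : 0 < Cmod (q z)) by (apply Cmod_gt_0; auto).
  destruct (D_lip q z L H) as [d [hd Hd]].
  set (d' := Rmin d (Cmod (q z) / (2 * (Cmod L + 1)))).
  assert (hd' : 0 < d'). { apply Rmin_glb_lt; auto. apply Rdiv_lt_0_compat; auto. pose proof (Cmod_ge_0 L); lra. }
  assert (Hnear : forall k, Cmod k < d' -> Cmod (q (z + k) - q z)%C <= Cmod (q z) / 2).
  { intros k hk. pose proof (Hd k (Rlt_le_trans _ _ _ hk (Rmin_l _ _))).
    pose proof (Rlt_le_trans _ _ _ hk (Rmin_r _ _)). pose proof (Cmod_ge_0 L).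
    eapply Rle_trans. apply H0. apply Rle_trans with ((Cmod L + 1) * (Cmod (q z) / (2 * (Cmod L + 1)))).
    apply Rmult_le_compat_l; lra. right. field. lra. }
  assert (Hlow : forall k, Cmod k < d' -> Cmod (q z) / 2 <= Cmod (q (z + k)%C)).
  { intros k hk. pose proof (Hnear k hk).
    assert (E0 : q z = (q (z+k) - (q (z+k) - q z))%C) by ring.
    pose proof (Cmod_minus_le (q (z + k)%C) (q (z + k) - q z)%C).
    rewrite <- E0 in H1. lra. }
  assert (Hnz : forall k, Cmod k < d' -> q (z + k)%C <> C0).
  { intros k hk E0. pose proof (Hlow k hk). rewrite E0, Cmod_0 in H0. lra. }
  assert (Bi : Bnd (fun k => - / (q z * q (z + k)))%C).
  { exists d', (2 / (Cmod (q z) * Cmod (q z))). split; auto. intros k hk.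
    rewrite Cmod_opp, Cmod_inv, Cmod_mult. 2: { apply Cmult_neq_0; auto. }
    pose proof (Hlow k hk). unfold Rdiv. apply Rle_trans with (/ (Cmod (q z) * (Cmod (q z) / 2))).
    apply Rinv_le_contravar. nra. apply Rmult_le_compat_l; lra. right. field. lra. }
  pose proof (S_mul _ _ Bi H) as A1.
  assert (A2 : Small (fun k => L * k * ((q (z + k) - q z) / (q z * q z * q (z + k))))%C).
  { apply S_quad. exists d', (Cmod L * (Cmod L + 1) * (2 / (Cmod (q z) * Cmod (q z) * Cmod (q z)))).
    split; auto. intros k hk. pose proof (Hlow k hk).
    rewrite Cmod_mult, Cmod_mult, Cmod_div, !Cmod_mult.
    2: { repeat apply Cmult_neq_0; auto. }
    pose proof (Hd k (Rlt_le_trans _ _ _ hk (Rmin_l _ _))).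
    set (a := Cmod (q z)) in *. set (b := Cmod (q (z + k)%C)) in *. set (m := Cmod k) in *.
    set (l := Cmod L). set (e := Cmod (q (z + k) - q z)%C) in *.
    assert (0 <= l) by apply Cmod_ge_0. assert (0 <= m) by apply Cmod_ge_0. assert (0 <= e) by apply Cmod_ge_0.
    assert (e / (a * a * b) <= (l + 1) * m * (2 / (a*a*a))).
    { assert (0 < a * a * a) by (apply Rmult_lt_0_compat; nra).
      assert (HI : / (a * a * b) <= / (a * a * a / 2)).
      { apply Rinv_le_contravar. nra. assert (0 < a*a) by nra. 
        replace (a * a * a / 2) with (a * a * (a/2)) by field. apply Rmult_le_compat_l; lra. }
      replace (/ (a * a * a / 2)) with (2 / (a*a*a)) in HI by (field; lra).
      unfold Rdiv at 1. apply Rmult_le_compat; auto. left; apply Rinv_0_lt_compat. nra. }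
    replace (l * (l + 1) * (2 / (a * a * a)) * m * m) with ((l * m) * ((l + 1) * m * (2 / (a * a * a)))) by ring.
    apply Rmult_le_compat_l; nra. }
  unfold Dq. eapply (S_ext_loc _ _ d'); [auto| |apply (S_plus _ _ A1 A2)].
  intros k hk. pose proof (Hnz k hk). simpl. field. split; auto.
Qed.

Lemma norm_C (x : C) : @norm R_AbsRing C_R_NormedModule x = Cmod x.
Proof. unfold norm; simpl; unfold prod_norm; simpl. unfold Cmod. f_equal.
  unfold norm; simpl; unfold abs; simpl.
  replace (Rabs (fst x) * (Rabs (fst x) * 1)) with (Rsqr (Rabs (fst x))) by (unfold Rsqr; ring).
  replace (Rabs (snd x) * (Rabs (snd x) * 1)) with (Rsqr (Rabs (snd x))) by (unfold Rsqr; ring).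
  rewrite <- !Rsqr_abs. unfold Rsqr. ring. Qed.

Lemma scal_C (x : C) (r : R) : @scal R_AbsRing C_R_NormedModule r x = (r * x)%C.
Proof. apply C_eq; simpl; unfold scal; simpl; unfold mult; simpl; ring. Qed.

Definition contC (f : R -> C) (x : R) := forall eps, 0 < eps -> exists delta, 0 < delta /\
  forall y, Rabs (y - x) < delta -> Cmod (f y - f x) < eps.

Lemma contC_continuous f x : contC f x -> continuous f x.
Proof.
  intros H. intros P [eps HP]. unfold filtermap.
  destruct (H eps (cond_pos eps)) as [d [hd Hd]].
  exists (mkposreal d hd). intros y Hy. apply HP.
  apply C_NormedModule_mixin_compat1. apply Hd. apply Hy.
Qed.

Lemma contC_ex_RInt f a b : a <= b -> (forall x, a <= x <= b -> contC f x) -> ex_RInt f a b.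
Proof. intros hab H. apply (@ex_RInt_continuous C_R_CompleteNormedModule).
  intros z hz. apply contC_continuous, H. rewrite Rmin_left, Rmax_right in hz; auto. Qed.

Lemma contC_const c x : contC (fun _ => c) x.
Proof. intros eps he; exists 1; split; [lra|]; intros. replace (c - c)%C with C0 by ring. rewrite Cmod_0; lra. Qed.

Lemma contC_plus f g x : contC f x -> contC g x -> contC (fun t => f t + g t)%C x.
Proof.
  intros Hf Hg eps he. destruct (Hf (eps/2)) as [d1 [h1 H1]]; [lra|].
  destruct (Hg (eps/2)) as [d2 [h2 H2]]; [lra|].
  exists (Rmin d1 d2); split; [apply Rmin_glb_lt; auto|].
  intros y hy. replace (f y + g y - (f x + g x))%C with ((f y - f x) + (g y - g x))%C by ring.
  eapply Rle_lt_trans. apply Cmod_triangle.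
  pose proof (H1 y (Rlt_le_trans _ _ _ hy (Rmin_l _ _))).
  pose proof (H2 y (Rlt_le_trans _ _ _ hy (Rmin_r _ _))). lra.
Qed.

Lemma contC_mul f g x : contC f x -> contC g x -> contC (fun t => f t * g t)%C x.
Proof.
  intros Hf Hg eps he.
  set (M := Cmod (f x) + Cmod (g x) + 1).
  assert (hM : 1 <= M) by (unfold M; pose proof (Cmod_ge_0 (f x)); pose proof (Cmod_ge_0 (g x)); lra).
  set (e := Rmin 1 (eps / (3 * M))).
  assert (he' : 0 < e) by (apply Rmin_glb_lt; [lra|apply Rdiv_lt_0_compat; lra]).
  destruct (Hf e he') as [d1 [h1 H1]]. destruct (Hg e he') as [d2 [h2 H2]].
  exists (Rmin d1 d2); split; [apply Rmin_glb_lt; auto|].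
  intros y hy.
  pose proof (H1 y (Rlt_le_trans _ _ _ hy (Rmin_l _ _))) as A1.
  pose proof (H2 y (Rlt_le_trans _ _ _ hy (Rmin_r _ _))) as A2.
  replace (f y * g y - f x * g x)%C with ((f y - f x) * (g y - g x) + (f y - f x) * g x + f x * (g y - g x))%C by ring.
  eapply Rle_lt_trans. apply Cmod_triangle. eapply Rle_lt_trans. apply Rplus_le_compat_r. apply Cmod_triangle.
  rewrite !Cmod_mult.
  assert (e <= 1) by apply Rmin_l. assert (e <= eps / (3*M)) by apply Rmin_r.
  assert (e * M <= eps / 3). { apply Rle_trans with (eps / (3 * M) * M). apply Rmult_le_compat_r; lra.
    right. field. lra. }
  pose proof (Cmod_ge_0 (f y - f x)%C). pose proof (Cmod_ge_0 (g y - g x)%C).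
  pose proof (Cmod_ge_0 (f x)). pose proof (Cmod_ge_0 (g x)).
  assert (Cmod (f y - f x)%C * Cmod (g y - g x)%C <= e * 1) by (apply Rmult_le_compat; lra).
  assert (Cmod (f y - f x)%C * Cmod (g x) <= e * M) by (apply Rmult_le_compat; unfold M in *; lra).
  assert (Cmod (f x) * Cmod (g y - g x)%C < M * e).
  { apply Rle_lt_trans with (Cmod (f x) * e). apply Rmult_le_compat_l; lra.
    apply Rmult_lt_compat_r; auto. unfold M; lra. }
  assert (e * 1 <= eps / 3). { apply Rle_trans with (e * M). apply Rmult_le_compat_l; lra. lra. }
  lra.
Qed.

Lemma contC_E x : contC E x.
Proof. intros eps he. exists (eps/2). split; [lra|]. intros y hy.
  eapply Rle_lt_trans. apply E_lip. lra. Qed.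

Lemma contC_comp_lin f x c : contC f (c * x) -> contC (fun t => f (c * t)) x.
Proof.
  intros H eps he. destruct (H eps he) as [d [hd Hd]].
  exists (d / (Rabs c + 1)). split. apply Rdiv_lt_0_compat; auto. pose proof (Rabs_pos c); lra.
  intros y hy. apply Hd. replace (c * y - c * x) with (c * (y - x)) by ring. rewrite Rabs_mult.
  pose proof (Rabs_pos c). pose proof (Rabs_pos (y - x)).
  apply Rle_lt_trans with ((Rabs c + 1) * Rabs (y - x)). nra.
  apply Rmult_lt_reg_r with (/ (Rabs c + 1)). apply Rinv_0_lt_compat; lra.
  rewrite (Rmult_comm (Rabs c + 1)), Rmult_assoc, Rinv_r by lra. lra.
Qed.

Lemma is_RInt_Cmul (f : R -> C) a b l c :
  is_RInt f a b l -> is_RInt (fun t => c * f t)%C a b (c * l)%C.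
Proof.
  intros H.
  pose proof (is_RInt_fct_extend_fst f a b l H) as H1.
  pose proof (is_RInt_fct_extend_snd f a b l H) as H2.
  replace (c * l)%C with (fst c * fst l - snd c * snd l, fst c * snd l + snd c * fst l) by reflexivity.
  apply is_RInt_fct_extend_pair; simpl.
  - apply (is_RInt_minus (V:=R_NormedModule) (fun t => fst c * fst (f t)) (fun t => snd c * snd (f t))).
    apply (is_RInt_scal (V:=R_NormedModule) _ _ _ _ _ H1).
    apply (is_RInt_scal (V:=R_NormedModule) _ _ _ _ _ H2).
  - apply (is_RInt_plus (V:=R_NormedModule) (fun t => fst c * snd (f t)) (fun t => snd c * fst (f t))).
    apply (is_RInt_scal (V:=R_NormedModule) _ _ _ _ _ H2).
    apply (is_RInt_scal (V:=R_NormedModule) _ _ _ _ _ H1).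
Qed.

Lemma is_RInt_Cplus (f g : R -> C) a b l1 l2 :
  is_RInt f a b l1 -> is_RInt g a b l2 -> is_RInt (fun t => f t + g t)%C a b (l1 + l2)%C.
Proof. intros H1 H2. apply (is_RInt_plus _ _ _ _ _ _ H1 H2). Qed.

Lemma is_RInt_Cminus (f g : R -> C) a b l1 l2 :
  is_RInt f a b l1 -> is_RInt g a b l2 -> is_RInt (fun t => f t - g t)%C a b (l1 - l2)%C.
Proof. intros H1 H2. apply (is_RInt_minus _ _ _ _ _ _ H1 H2). Qed.

Lemma is_RInt_Cext (f g : R -> C) a b l :
  (forall t, f t = g t) -> is_RInt f a b l -> is_RInt g a b l.
Proof. intros E H. apply (is_RInt_ext f); auto. Qed.

Lemma is_RInt_Cnorm (f : R -> C) a b l M :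
  a <= b -> (forall t, a <= t <= b -> Cmod (f t) <= M) -> is_RInt f a b l -> Cmod l <= (b - a) * M.
Proof. intros hab HM H. rewrite <- norm_C. apply (norm_RInt_le_const f a b l M hab); auto.
  intros; rewrite norm_C; auto. Qed.

Lemma is_RInt_Cconst (c : C) a b : is_RInt (fun _ => c) a b (RtoC (b - a) * c)%C.
Proof. rewrite <- scal_C. apply (is_RInt_const (V:=C_R_NormedModule)). Qed.

Lemma is_RInt_unique_C (f : R -> C) a b l1 l2 : is_RInt f a b l1 -> is_RInt f a b l2 -> l1 = l2.
Proof. intros H1 H2. rewrite <- (is_RInt_unique (V:=C_R_CompleteNormedModule) f a b l1 H1). apply (is_RInt_unique (V:=C_R_CompleteNormedModule)); auto. Qed.

Lemma is_RInt_Cchasles (f : R -> C) a b c l1 l2 :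
  is_RInt f a b l1 -> is_RInt f b c l2 -> is_RInt f a c (l1 + l2)%C.
Proof. intros. apply (is_RInt_Chasles f a b c l1 l2); auto. Qed.

Lemma is_RInt_cos_lin m a b : m <> 0 -> is_RInt (fun t => cos (m * t)) a b ((sin (m*b) - sin (m*a)) / m).
Proof.
  intros hm. replace ((sin (m*b) - sin (m*a)) / m) with (minus ((fun t => sin (m*t)/m) b) ((fun t => sin (m*t)/m) a))
   by (unfold minus, plus, opp; simpl; field; auto).
  apply (is_RInt_derive (V:=R_CompleteNormedModule) (fun t => sin (m*t)/m)).
  - intros x _. auto_derive; auto. field; auto.
  - intros x _. apply continuity_pt_filterlim. apply continuity_pt_comp with (f1 := fun t => m * t).
    apply derivable_continuous_pt. apply derivable_pt_scal. apply derivable_pt_id.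
    apply continuity_cos.
Qed.

Lemma is_RInt_sin_lin m a b : m <> 0 -> is_RInt (fun t => sin (m * t)) a b (- (cos (m*b) - cos (m*a)) / m).
Proof.
  intros hm. replace (- (cos (m*b) - cos (m*a)) / m) with (minus ((fun t => - cos (m*t)/m) b) ((fun t => - cos (m*t)/m) a))
   by (unfold minus, plus, opp; simpl; field; auto).
  apply (is_RInt_derive (V:=R_CompleteNormedModule) (fun t => - cos (m*t)/m)).
  - intros x _. auto_derive; auto. field; auto.
  - intros x _. apply continuity_pt_filterlim. apply continuity_pt_comp with (f1 := fun t => m * t).
    apply derivable_continuous_pt. apply derivable_pt_scal. apply derivable_pt_id.
    apply continuity_sin.
Qed.

Lemma is_RInt_E_lin m a b : m <> 0 ->
  is_RInt (fun t => E (m * t)) a b ((E (m*b) - E (m*a)) / (Ci * m))%C.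
Proof.
  intros hm.
  replace ((E (m*b) - E (m*a)) / (Ci * m))%C with ((sin (m*b) - sin (m*a)) / m, - (cos (m*b) - cos (m*a)) / m).
  apply is_RInt_fct_extend_pair; simpl. apply is_RInt_cos_lin; auto. apply is_RInt_sin_lin; auto.
  apply C_eq; simpl; field; auto.
Qed.

Lemma is_RInt_id_C (c : C) a b : is_RInt (fun r => (RtoC r) * c)%C a b (RtoC ((b*b - a*a)/2) * c)%C.
Proof.
  assert (H : is_RInt (fun r : R => r) a b ((b*b - a*a)/2)).
  { replace ((b*b - a*a)/2) with (minus ((fun r => r*r/2) b) ((fun r => r*r/2) a))
      by (unfold minus, plus, opp; simpl; field).
    apply (is_RInt_derive (V:=R_CompleteNormedModule) (fun r => r*r/2)).
    intros x _. auto_derive; auto. field.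
    intros x _. apply continuity_pt_filterlim. apply derivable_continuous_pt, derivable_pt_id. }
  replace (RtoC ((b*b - a*a)/2) * c)%C with (c * (((b*b-a*a)/2)%R, 0%R))%C by (apply C_eq; simpl; ring).
  apply (is_RInt_Cext (fun t => c * (t, 0%R))%C). intros t. apply C_eq; simpl; ring.
  apply is_RInt_Cmul.
  apply is_RInt_fct_extend_pair; simpl. apply H.
  pose proof (is_RInt_const (V:=R_NormedModule) a b 0) as H0.
  unfold scal in H0; simpl in H0; unfold mult in H0; simpl in H0. rewrite Rmult_0_r in H0. exact H0.
Qed.

Lemma Dq_cont q w0 L : Dq q w0 L -> forall eps, 0 < eps -> exists delta, 0 < delta /\
  forall w, Cmod (w - w0) < delta -> Cmod (q w - q w0) < eps.
Proof.
  intros H eps he. destruct (D_lip q w0 L H) as [d [hd Hd]].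
  pose proof (Cmod_ge_0 L).
  exists (Rmin d (eps / (Cmod L + 2))). split. apply Rmin_glb_lt; auto. apply Rdiv_lt_0_compat; lra.
  intros w hw. pose proof (Hd (w - w0)%C (Rlt_le_trans _ _ _ hw (Rmin_l _ _))).
  replace (w0 + (w - w0))%C with w in H1 by ring.
  pose proof (Rlt_le_trans _ _ _ hw (Rmin_r _ _)). pose proof (Cmod_ge_0 (w - w0)%C).
  eapply Rle_lt_trans. apply H1.
  apply Rle_lt_trans with ((Cmod L + 1) * (eps / (Cmod L + 2))). apply Rmult_le_compat_l; lra.
  apply Rlt_le_trans with ((Cmod L + 2) * (eps / (Cmod L + 2))). apply Rmult_lt_compat_r.
  apply Rdiv_lt_0_compat; lra. lra. right; field; lra.
Qed.

Lemma contC_path q (g : R -> C) t0 K : 0 <= K ->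
  (forall t, Cmod (g t - g t0) <= K * Rabs (t - t0)) ->
  (exists L, Dq q (g t0) L) -> contC (fun t => q (g t)) t0.
Proof.
  intros hK Hg [L HL] eps he. destruct (Dq_cont q (g t0) L HL eps he) as [d [hd Hd]].
  exists (d / (K + 1)). split. apply Rdiv_lt_0_compat; lra.
  intros y hy. apply Hd. eapply Rle_lt_trans. apply Hg.
  pose proof (Rabs_pos (y - t0)).
  apply Rle_lt_trans with ((K+1) * Rabs (y - t0)). nra.
  apply Rmult_lt_reg_r with (/ (K + 1)). apply Rinv_0_lt_compat; lra.
  rewrite (Rmult_comm (K + 1)), Rmult_assoc, Rinv_r by lra. lra.
Qed.

Lemma Cmod_RE r t : Cmod (RtoC r * E t)%C = Rabs r.
Proof. rewrite Cmod_mult, Cmod_R, Cmod_E. ring. Qed.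

Lemma path_ang r t0 t : Cmod (RtoC r * E t - RtoC r * E t0)%C <= (2 * Rabs r) * Rabs (t - t0).
Proof. replace (RtoC r * E t - RtoC r * E t0)%C with (RtoC r * (E t - E t0))%C by ring.
  rewrite Cmod_mult, Cmod_R. pose proof (E_lip t0 t). pose proof (Rabs_pos r). nra. Qed.

Lemma path_rad th r0 r : Cmod (RtoC r * E th - RtoC r0 * E th)%C <= 1 * Rabs (r - r0).
Proof. replace (RtoC r * E th - RtoC r0 * E th)%C with (RtoC (r - r0) * E th)%C by (apply C_eq; simpl; ring).
  rewrite Cmod_RE. lra. Qed.

Definition Aint (q : C -> C) (r t : R) : C := (q (RtoC r * E t) * (Ci * RtoC r * E t))%C.
Definition Rint (q : C -> C) (th r : R) : C := (q (RtoC r * E th) * E th)%C.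
Definition IA q r al be : C := RInt (V:=C_R_CompleteNormedModule) (Aint q r) al be.
Definition IR q th a b : C := RInt (V:=C_R_CompleteNormedModule) (Rint q th) a b.
Definition Gam q a b al be : C := (IA q b al be - IA q a al be + IR q al a b - IR q be a b)%C.

Section Ann.
Variable q : C -> C.
Variables a0 b0 : R.
Hypothesis ha0 : 0 < a0.
Hypothesis hab0 : a0 <= b0.
Hypothesis hb0 : b0 <= 1.
Hypothesis HD : forall w, a0 <= Cmod w <= b0 -> exists L, Dq q w L.

Lemma ex_IA r al be : a0 <= r <= b0 -> al <= be -> ex_RInt (V:=C_R_CompleteNormedModule) (Aint q r) al be.
Proof.
  intros hr hab. apply contC_ex_RInt; auto. intros t _. unfold Aint.
  apply contC_mul. apply (contC_path q (fun t => RtoC r * E t)%C t (2 * Rabs r)).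
  pose proof (Rabs_pos r); lra. intros; apply path_ang. apply HD. rewrite Cmod_RE, Rabs_right; lra.
  apply contC_mul. apply contC_const. apply contC_E.
Qed.

Lemma ex_IR th a b : a0 <= a -> a <= b -> b <= b0 -> ex_RInt (V:=C_R_CompleteNormedModule) (Rint q th) a b.
Proof.
  intros h1 h2 h3. apply contC_ex_RInt; auto. intros r hr. unfold Rint.
  apply contC_mul. apply (contC_path q (fun r => RtoC r * E th)%C r 1). lra.
  intros; apply path_rad. apply HD. rewrite Cmod_RE, Rabs_right; lra. apply contC_const.
Qed.

Lemma IA_chasles r al mu be : a0 <= r <= b0 -> al <= mu -> mu <= be ->
  IA q r al be = (IA q r al mu + IA q r mu be)%C.
Proof. intros. unfold IA. rewrite <- (RInt_Chasles (V:=C_R_CompleteNormedModule) _ al mu be). reflexivity.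
  apply ex_IA; auto. apply ex_IA; auto. Qed.

Lemma IR_chasles th a m b : a0 <= a -> a <= m -> m <= b -> b <= b0 ->
  IR q th a b = (IR q th a m + IR q th m b)%C.
Proof. intros. unfold IR. rewrite <- (RInt_Chasles (V:=C_R_CompleteNormedModule) _ a m b). reflexivity.
  apply ex_IR; lra. apply ex_IR; lra. Qed.

Lemma Gam_split a m b al mu be : a0 <= a -> a <= m -> m <= b -> b <= b0 -> al <= mu -> mu <= be ->
  Gam q a b al be = (Gam q a m al mu + Gam q m b al mu + Gam q a m mu be + Gam q m b mu be)%C.
Proof.
  intros. unfold Gam.
  rewrite (IA_chasles b al mu be), (IA_chasles a al mu be) by lra.
  rewrite (IR_chasles al a m b), (IR_chasles be a m b) by lra.
  ring.
Qed.

End Ann.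

Lemma E_double t : E (2 * t) = (E t * E t)%C.
Proof. replace (2 * t) with (t + t) by ring. apply E_add. Qed.

Lemma is_RInt_Aint_lin c L r al be :
  is_RInt (Aint (fun w => c + L * w)%C r) al be
    (RtoC r * c * (E be - E al) + RtoC (r * r / 2) * L * (E be * E be - E al * E al))%C.
Proof.
  assert (H1 := is_RInt_E_lin 1 al be ltac:(lra)).
  assert (H2 := is_RInt_E_lin 2 al be ltac:(lra)).
  pose proof (is_RInt_Cplus _ _ _ _ _ _ (is_RInt_Cmul _ _ _ _ (Ci * RtoC r * c)%C H1)
     (is_RInt_Cmul _ _ _ _ (Ci * RtoC (r*r) * L)%C H2)) as H.
  match type of H with is_RInt _ _ _ ?v => replace (RtoC r * c * (E be - E al) + RtoC (r * r / 2) * L * (E be * E be - E al * E al))%C with v end.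
  - eapply is_RInt_Cext; [| apply H].
    intros t. unfold Aint. rewrite E_double. replace (1 * t) with t by ring.
    apply C_eq; simpl; ring.
  - rewrite !E_double. replace (1 * be) with be by ring. replace (1 * al) with al by ring.
    apply C_eq; simpl; field.
Qed.

Lemma is_RInt_Rint_lin c L th a b :
  is_RInt (Rint (fun w => c + L * w)%C th) a b
    (RtoC (b - a) * (c * E th) + RtoC ((b*b - a*a)/2) * (L * E th * E th))%C.
Proof.
  pose proof (is_RInt_Cplus _ _ _ _ _ _ (is_RInt_Cconst (c * E th)%C a b) (is_RInt_id_C (L * E th * E th)%C a b)) as H.
  eapply is_RInt_Cext; [|apply H]. intros r. unfold Rint. apply C_eq; simpl; ring.
Qed.

Definition vA c L r al be := (RtoC r * c * (E be - E al) + RtoC (r * r / 2) * L * (E be * E be - E al * E al))%C.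
Definition vR c L th a b := (RtoC (b - a) * (c * E th) + RtoC ((b*b - a*a)/2) * (L * E th * E th))%C.

Lemma vsum0 c L a b al be : (vA c L b al be - vA c L a al be + vR c L al a b - vR c L be a b)%C = C0.
Proof. unfold vA, vR. apply C_eq; simpl; field. Qed.

Lemma Cmod4 x y z w : Cmod (x - y + z - w)%C <= Cmod x + Cmod y + Cmod z + Cmod w.
Proof. eapply Rle_trans. apply Cmod_minus_le. eapply Rle_trans. apply Rplus_le_compat_r. apply Cmod_triangle.
  pose proof (Cmod_minus_le x y). lra. Qed.

Section Loc.
Variable q : C -> C.
Variables a0 b0 : R.
Hypothesis ha0 : 0 < a0.
Hypothesis hab0 : a0 <= b0.
Hypothesis hb0 : b0 <= 1.
Hypothesis HD : forall w, a0 <= Cmod w <= b0 -> exists L, Dq q w L.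

Lemma Gam_local a b al be rs ts L eps delta :
  a0 <= a -> a <= rs -> rs <= b -> b <= b0 -> al <= ts -> ts <= be -> 0 <= eps ->
  (forall k, Cmod k < delta -> Cmod (q (RtoC rs * E ts + k) - q (RtoC rs * E ts) - L * k)%C <= eps * Cmod k) ->
  (b - a) + 2 * (be - al) < delta ->
  Cmod (Gam q a b al be) <= 4 * eps * (((b - a) + (be - al)) * ((b - a) + (be - al))).
Proof.
  intros h1 h2 h3 h4 h5 h6 he Hs Hdel.
  set (z0 := (RtoC rs * E ts)%C) in *.
  set (c := (q z0 - L * z0)%C).
  set (S0 := (b - a) + 2 * (be - al)).
  assert (He : forall r t, a <= r <= b -> al <= t <= be ->
     Cmod (q (RtoC r * E t) - (c + L * (RtoC r * E t)))%C <= eps * S0).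
  { intros r t hr ht. set (w := (RtoC r * E t)%C).
    assert (hw : Cmod (w - z0) <= S0).
    { unfold w, z0, S0. replace (RtoC r * E t - RtoC rs * E ts)%C with
        ((RtoC r * E t - RtoC rs * E t) + (RtoC rs * E t - RtoC rs * E ts))%C by ring.
      eapply Rle_trans. apply Cmod_triangle. pose proof (path_rad t rs r) as P1. pose proof (path_ang rs ts t) as P2.
      assert (Rabs (r - rs) <= b - a) by (apply Rabs_le; lra).
      assert (Rabs rs <= 1) by (rewrite Rabs_right; lra).
      assert (Rabs (t - ts) <= be - al) by (apply Rabs_le; lra).
      pose proof (Rabs_pos rs). pose proof (Rabs_pos (t - ts)).
      assert (2 * Rabs rs * Rabs (t - ts) <= 2 * (be - al)) by nra. lra. }
    assert (Cmod (w - z0)%C < delta) by (unfold S0 in hw; lra). pose proof (Hs (w - z0)%C H) as H0. replace (z0 + (w - z0))%C with w in H0 by ring.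
    replace (q w - (c + L * w))%C with (q w - q z0 - L * (w - z0))%C by (unfold c; ring).
    eapply Rle_trans. apply H0. apply Rmult_le_compat_l; auto. }
  assert (HA : forall r, a0 <= r <= b0 -> a <= r <= b -> Cmod (IA q r al be - vA c L r al be)%C <= (be - al) * (eps * S0)).
  { intros r hr0 hr. assert (Hex := ex_IA q a0 b0 ha0 HD r al be hr0 ltac:(lra)).
    pose proof (RInt_correct _ _ _ Hex) as H1. fold (IA q r al be) in H1.
    pose proof (is_RInt_Cminus _ _ _ _ _ _ H1 (is_RInt_Aint_lin c L r al be)) as H2.
    eapply is_RInt_Cnorm; [lra| |apply H2]. intros t ht. unfold Aint.
    replace (q (RtoC r * E t) * (Ci * RtoC r * E t) - (c + L * (RtoC r * E t)) * (Ci * RtoC r * E t))%C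
      with ((q (RtoC r * E t) - (c + L * (RtoC r * E t))) * (Ci * RtoC r * E t))%C by ring.
    rewrite Cmod_mult. replace (Ci * RtoC r * E t)%C with (Ci * (RtoC r * E t))%C by ring.
    rewrite Cmod_mult, Cmod_RE. replace (Cmod Ci) with 1 by (unfold Cmod; simpl; replace (0 * (0 * 1) + 1 * (1 * 1)) with 1 by ring; rewrite sqrt_1; auto).
    rewrite Rabs_right by lra. pose proof (He r t hr ht). pose proof (Cmod_ge_0 (q (RtoC r * E t) - (c + L * (RtoC r * E t)))%C).
    assert (0 <= eps * S0) by (unfold S0; nra). nra. }
  assert (HR : forall th, al <= th <= be -> Cmod (IR q th a b - vR c L th a b)%C <= (b - a) * (eps * S0)).
  { intros th hth. assert (Hex := ex_IR q a0 b0 ha0 HD th a b ltac:(lra) ltac:(lra) ltac:(lra)).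
    pose proof (RInt_correct _ _ _ Hex) as H1. fold (IR q th a b) in H1.
    pose proof (is_RInt_Cminus _ _ _ _ _ _ H1 (is_RInt_Rint_lin c L th a b)) as H2.
    eapply is_RInt_Cnorm; [lra| |apply H2]. intros r hr. unfold Rint.
    replace (q (RtoC r * E th) * E th - (c + L * (RtoC r * E th)) * E th)%C
      with ((q (RtoC r * E th) - (c + L * (RtoC r * E th))) * E th)%C by ring.
    rewrite Cmod_mult, Cmod_E. rewrite Rmult_1_r. apply He; lra. }
  assert (Gam q a b al be = ((IA q b al be - vA c L b al be) - (IA q a al be - vA c L a al be)
     + (IR q al a b - vR c L al a b) - (IR q be a b - vR c L be a b))%C).
  { unfold Gam. pose proof (vsum0 c L a b al be).
    replace (IA q b al be - IA q a al be + IR q al a b - IR q be a b)%C with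
      ((IA q b al be - vA c L b al be) - (IA q a al be - vA c L a al be)
     + (IR q al a b - vR c L al a b) - (IR q be a b - vR c L be a b) +
      (vA c L b al be - vA c L a al be + vR c L al a b - vR c L be a b))%C by ring.
    rewrite H. ring. }
  rewrite H.
  pose proof (HA b ltac:(lra) ltac:(lra)). pose proof (HA a ltac:(lra) ltac:(lra)).
  pose proof (HR al ltac:(lra)). pose proof (HR be ltac:(lra)).
  eapply Rle_trans. apply Cmod4.
  assert (S0 <= 2 * ((b - a) + (be - al))) by (unfold S0; lra).
  assert (0 <= eps * S0) by (unfold S0; nra).
  assert (2 * (be - al) * (eps * S0) + 2 * (b - a) * (eps * S0) <= 4 * eps * ((b - a + (be - al)) * (b - a + (be - al)))).
  { replace (2 * (be - al) * (eps * S0) + 2 * (b - a) * (eps * S0)) with (2 * eps * ((b - a) + (be - al)) * S0) by ring.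
    replace (4 * eps * ((b - a + (be - al)) * (b - a + (be - al)))) with (2 * eps * ((b - a) + (be - al)) * (2 * ((b - a) + (be - al)))) by ring.
    apply Rmult_le_compat_l; auto. assert (0 <= b - a + (be - al)) by lra. nra. }
  lra.
Qed.

End Loc.

Record Rect := mkRect { ra : R; rb : R; ral : R; rbe : R }.

Definition Lr (s : Rect) := (rb s - ra s) + (rbe s - ral s).
Definition Q1 s := mkRect (ra s) ((ra s + rb s)/2) (ral s) ((ral s + rbe s)/2).
Definition Q2 s := mkRect ((ra s + rb s)/2) (rb s) (ral s) ((ral s + rbe s)/2).
Definition Q3 s := mkRect (ra s) ((ra s + rb s)/2) ((ral s + rbe s)/2) (rbe s).
Definition Q4 s := mkRect ((ra s + rb s)/2) (rb s) ((ral s + rbe s)/2) (rbe s).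

Lemma pow2_ge n : INR n <= 2 ^ n.
Proof. induction n. simpl; lra. rewrite S_INR. simpl. assert (1 <= 2 ^ n) by (apply pow_R1_Rle; lra). lra. Qed.

Lemma small_pow2 W d : 0 < d -> exists n, W / 2 ^ n < d.
Proof.
  intros hd. destruct (Rle_or_lt W 0) as [hW|hW].
  - exists 0%nat. simpl. lra.
  - destruct (archimed (W / d)) as [h1 _]. destruct (INR_unbounded (W/d)) as [n hn].
    exists n. pose proof (pow2_ge n). assert (0 < 2 ^ n) by (apply pow_lt; lra).
    apply Rmult_lt_reg_r with (2 ^ n); auto. unfold Rdiv. rewrite Rmult_assoc, Rinv_l by lra.
    assert (W < d * INR n). { apply Rmult_lt_reg_r with (/ d). apply Rinv_0_lt_compat; auto.
      rewrite (Rmult_comm d), Rmult_assoc, Rinv_r by lra. lra. }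
    nra.
Qed.

Lemma cv_le_const u l c : Un_cv u l -> (forall n, u n <= c) -> l <= c.
Proof.
  intros H Hu. destruct (Rle_or_lt l c) as [h|h]; auto.
  destruct (H (l - c)) as [N HN]; [lra|]. specialize (HN N (Nat.le_refl N)). specialize (Hu N).
  unfold R_dist in HN. apply Rabs_lt_between in HN. lra.
Qed.

Section Nest.
Variable q : C -> C.
Variables a0 b0 : R.
Hypothesis ha0 : 0 < a0.
Hypothesis hab0 : a0 <= b0.
Hypothesis hb0 : b0 <= 1.
Hypothesis HD : forall w, a0 <= Cmod w <= b0 -> exists L, Dq q w L.
Variable kap : R.
Hypothesis hkap : 0 < kap.

Definition GamR s := Gam q (ra s) (rb s) (ral s) (rbe s).
Definition Bad s := kap * (Lr s * Lr s) < Cmod (GamR s).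
Definition Valid s := a0 <= ra s /\ ra s <= rb s /\ rb s <= b0 /\ ral s <= rbe s.

Definition next s :=
  if Rlt_dec (kap * (Lr (Q1 s) * Lr (Q1 s))) (Cmod (GamR (Q1 s))) then Q1 s else
  if Rlt_dec (kap * (Lr (Q2 s) * Lr (Q2 s))) (Cmod (GamR (Q2 s))) then Q2 s else
  if Rlt_dec (kap * (Lr (Q3 s) * Lr (Q3 s))) (Cmod (GamR (Q3 s))) then Q3 s else Q4 s.

Definition Step s s' := Valid s' /\ ra s <= ra s' /\ rb s' <= rb s /\ ral s <= ral s' /\ rbe s' <= rbe s /\
  rb s' - ra s' = (rb s - ra s) / 2 /\ rbe s' - ral s' = (rbe s - ral s) / 2.

Lemma next_step s : Valid s -> Step s (next s).
Proof.
  intros [h1 [h2 [h3 h4]]].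
  assert (Step s (Q1 s)) by (unfold Step, Valid, Q1; simpl; repeat split; lra).
  assert (Step s (Q2 s)) by (unfold Step, Valid, Q2; simpl; repeat split; lra).
  assert (Step s (Q3 s)) by (unfold Step, Valid, Q3; simpl; repeat split; lra).
  assert (Step s (Q4 s)) by (unfold Step, Valid, Q4; simpl; repeat split; lra).
  unfold next. repeat destruct Rlt_dec; auto.
Qed.

Lemma next_bad s : Valid s -> Bad s -> Bad (next s).
Proof.
  intros hv hb. unfold next. destruct Rlt_dec as [h|h]; auto.
  destruct Rlt_dec as [h'|h']; auto. destruct Rlt_dec as [h''|h'']; auto.
  unfold Bad. destruct (Rlt_dec (kap * (Lr (Q4 s) * Lr (Q4 s))) (Cmod (GamR (Q4 s)))) as [h3|h3]; auto.
  exfalso. destruct hv as [v1 [v2 [v3 v4]]].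
  assert (E0 : GamR s = (GamR (Q1 s) + GamR (Q2 s) + GamR (Q3 s) + GamR (Q4 s))%C).
  { unfold GamR, Q1, Q2, Q3, Q4; simpl. apply (Gam_split q a0 b0 ha0 HD); lra. }
  unfold Bad in hb. rewrite E0 in hb.
  assert (forall X, Lr (X s) = Lr s / 2 -> ~ kap * (Lr (X s) * Lr (X s)) < Cmod (GamR (X s)) -> Cmod (GamR (X s)) <= kap * (Lr s * Lr s) / 4).
  { intros X hX hn. apply Rnot_lt_le in hn. rewrite hX in hn. lra. }
  assert (L1 : Lr (Q1 s) = Lr s / 2) by (unfold Lr, Q1; simpl; field).
  assert (L2 : Lr (Q2 s) = Lr s / 2) by (unfold Lr, Q2; simpl; field).
  assert (L3 : Lr (Q3 s) = Lr s / 2) by (unfold Lr, Q3; simpl; field).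
  assert (L4 : Lr (Q4 s) = Lr s / 2) by (unfold Lr, Q4; simpl; field).
  pose proof (H Q1 L1 h). pose proof (H Q2 L2 h'). pose proof (H Q3 L3 h''). pose proof (H Q4 L4 h3).
  assert (Cmod (GamR (Q1 s) + GamR (Q2 s) + GamR (Q3 s) + GamR (Q4 s))%C <=
     Cmod (GamR (Q1 s)) + Cmod (GamR (Q2 s)) + Cmod (GamR (Q3 s)) + Cmod (GamR (Q4 s))).
  { eapply Rle_trans. apply Cmod_triangle. eapply Rle_trans. apply Rplus_le_compat_r. apply Cmod_triangle.
    pose proof (Cmod_triangle (GamR (Q1 s)) (GamR (Q2 s))). lra. }
  lra.
Qed.

Fixpoint sq (s0 : Rect) (n : nat) : Rect := match n with O => s0 | S m => next (sq s0 m) end.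

Lemma sq_props s0 : Valid s0 -> forall n, Valid (sq s0 n) /\
  rb (sq s0 n) - ra (sq s0 n) = (rb s0 - ra s0) / 2 ^ n /\
  rbe (sq s0 n) - ral (sq s0 n) = (rbe s0 - ral s0) / 2 ^ n.
Proof.
  intros hv n. induction n as [|n [IH1 [IH2 IH3]]].
  - simpl. split; [exact hv|]. split; field.
  - change (sq s0 (S n)) with (next (sq s0 n)). destruct (next_step _ IH1) as [v [_ [_ [_ [_ [w1 w2]]]]]].
    split; [exact v|]. split. rewrite w1, IH2. simpl. field. apply pow_nonzero; lra.
    rewrite w2, IH3. simpl. field. apply pow_nonzero; lra.
Qed.

Lemma sq_mono s0 : Valid s0 -> forall n k, ra (sq s0 n) <= ra (sq s0 (n + k)) /\ rb (sq s0 (n + k)) <= rb (sq s0 n)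
  /\ ral (sq s0 n) <= ral (sq s0 (n + k)) /\ rbe (sq s0 (n + k)) <= rbe (sq s0 n).
Proof.
  intros hv n k. induction k as [|k IH].
  - rewrite Nat.add_0_r. repeat split; lra.
  - replace (n + S k)%nat with (S (n + k)) by lia. change (sq s0 (S (n + k))) with (next (sq s0 (n + k))).
    destruct (sq_props s0 hv (n + k)) as [v _].
    destruct (next_step _ v) as [_ [s1 [s2 [s3 [s4 _]]]]]. lra.
Qed.

Lemma sq_bad s0 : Valid s0 -> Bad s0 -> forall n, Bad (sq s0 n).
Proof. intros hv hb n. induction n; auto. change (sq s0 (S n)) with (next (sq s0 n)). apply next_bad; auto. apply (sq_props s0 hv n). Qed.

Lemma ra_le_rb s0 : Valid s0 -> forall m n, ra (sq s0 m) <= rb (sq s0 n).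
Proof.
  intros hv m n. destruct (Nat.le_ge_cases m n) as [h|h].
  - destruct (sq_mono s0 hv m (n - m)) as [h1 _]. replace (m + (n - m))%nat with n in h1 by lia.
    destruct (sq_props s0 hv n) as [[_ [v _]] _]. lra.
  - destruct (sq_mono s0 hv n (m - n)) as [_ [h1 _]]. replace (n + (m - n))%nat with m in h1 by lia.
    destruct (sq_props s0 hv m) as [[_ [v _]] _]. lra.
Qed.

Lemma ral_le_rbe s0 : Valid s0 -> forall m n, ral (sq s0 m) <= rbe (sq s0 n).
Proof.
  intros hv m n. destruct (Nat.le_ge_cases m n) as [h|h].
  - destruct (sq_mono s0 hv m (n - m)) as [_ [_ [h1 _]]]. replace (m + (n - m))%nat with n in h1 by lia.
    destruct (sq_props s0 hv n) as [[_ [_ [_ v]]] _]. lra.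
  - destruct (sq_mono s0 hv n (m - n)) as [_ [_ [_ h1]]]. replace (n + (m - n))%nat with m in h1 by lia.
    destruct (sq_props s0 hv m) as [[_ [_ [_ v]]] _]. lra.
Qed.

Lemma not_bad s0 : Valid s0 -> ~ Bad s0.
Proof.
  intros hv hb.
  assert (g1 : Un_growing (fun n => ra (sq s0 n))).
  { intros n. destruct (sq_mono s0 hv n 1) as [h _]. rewrite Nat.add_1_r in h. auto. }
  assert (g2 : Un_growing (fun n => ral (sq s0 n))).
  { intros n. destruct (sq_mono s0 hv n 1) as [_ [_ [h _]]]. rewrite Nat.add_1_r in h. auto. }
  destruct (growing_cv _ g1) as [rs hrs].
  { exists (rb s0). intros x [n ->]. apply (ra_le_rb s0 hv n 0). }
  destruct (growing_cv _ g2) as [ts hts].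
  { exists (rbe s0). intros x [n ->]. apply (ral_le_rbe s0 hv n 0). }
  assert (A1 : forall n, ra (sq s0 n) <= rs) by (intros; apply (growing_ineq _ _ g1 hrs)).
  assert (A2 : forall n, ral (sq s0 n) <= ts) by (intros; apply (growing_ineq _ _ g2 hts)).
  assert (A3 : forall n, rs <= rb (sq s0 n)) by (intros n; apply (cv_le_const _ _ _ hrs); intros m; apply ra_le_rb; auto).
  assert (A4 : forall n, ts <= rbe (sq s0 n)) by (intros n; apply (cv_le_const _ _ _ hts); intros m; apply ral_le_rbe; auto).
  destruct hv as [v1 [v2 [v3 v4]]].
  pose proof (A1 0%nat) as B1; pose proof (A3 0%nat) as B2. simpl in B1, B2.
  destruct (HD (RtoC rs * E ts)%C) as [L HL]. rewrite Cmod_RE, Rabs_right; lra.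
  destruct (HL (kap / 8)) as [d [hd Hd]]. lra.
  destruct (small_pow2 ((rb s0 - ra s0) + 2 * (rbe s0 - ral s0)) d hd) as [n hn].
  pose proof (sq_bad s0 (conj v1 (conj v2 (conj v3 v4))) hb n) as Bn.
  destruct (sq_props s0 (conj v1 (conj v2 (conj v3 v4))) n) as [[w1 [w2 [w3 w4]]] [e1 e2]].
  assert (Hl := Gam_local q a0 b0 ha0 hb0 HD (ra (sq s0 n)) (rb (sq s0 n)) (ral (sq s0 n)) (rbe (sq s0 n)) rs ts L (kap/8) d
    w1 (A1 n) (A3 n) w3 (A2 n) (A4 n) ltac:(lra) Hd).
  assert (rb (sq s0 n) - ra (sq s0 n) + 2 * (rbe (sq s0 n) - ral (sq s0 n)) < d).
  { rewrite e1, e2. assert (0 < 2 ^ n) by (apply pow_lt; lra).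
    replace ((rb s0 - ra s0) / 2 ^ n + 2 * ((rbe s0 - ral s0) / 2 ^ n)) with
      ((rb s0 - ra s0 + 2 * (rbe s0 - ral s0)) / 2 ^ n) by (field; lra). auto. }
  specialize (Hl H). unfold Bad, GamR, Lr in Bn.
  set (X := (rb (sq s0 n) - ra (sq s0 n) + (rbe (sq s0 n) - ral (sq s0 n)))) in *.
  assert (0 <= X * X) by nra. assert (0 <= kap * (X * X)) by nra.
  assert (4 * (kap / 8) * (X * X) = kap * (X * X) / 2) by field. lra.
Qed.

End Nest.

Lemma Goursat q a0 b0 al be : 0 < a0 -> a0 <= b0 -> b0 <= 1 -> al <= be ->
  (forall w, a0 <= Cmod w <= b0 -> exists L, Dq q w L) -> Gam q a0 b0 al be = C0.
Proof.
  intros h1 h2 h3 h4 HD.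
  set (s0 := mkRect a0 b0 al be).
  assert (hv : Valid a0 b0 s0) by (unfold Valid, s0; simpl; repeat split; lra).
  set (X := Lr s0).
  assert (forall kap, 0 < kap -> Cmod (Gam q a0 b0 al be) <= kap * (X * X)).
  { intros kap hk. pose proof (not_bad q a0 b0 h1 h3 HD kap hk s0 hv) as nb.
    unfold Bad, GamR in nb. apply Rnot_lt_le in nb. exact nb. }
  destruct (Req_dec (Cmod (Gam q a0 b0 al be)) 0) as [E0|E0].
  apply Cmod_eq_0; auto.
  exfalso. pose proof (Cmod_ge_0 (Gam q a0 b0 al be)).
  assert (0 <= X * X) by nra.
  specialize (H (Cmod (Gam q a0 b0 al be) / (2 * (X * X + 1)))).
  assert (0 < Cmod (Gam q a0 b0 al be) / (2 * (X * X + 1))) by (apply Rdiv_lt_0_compat; lra).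
  specialize (H H2).
  set (G := Cmod (Gam q a0 b0 al be)) in *. set (y := X * X) in *.
  assert (E1 : G / (2 * (y + 1)) * y = G / 2 - G / (2 * (y + 1))) by (field; lra).
  assert (0 < G / (2 * (y + 1))) by (apply Rdiv_lt_0_compat; lra).
  lra.
Qed.

Lemma Cmod_Ci : Cmod Ci = 1.
Proof. unfold Cmod; simpl. replace (0 * (0 * 1) + 1 * (1 * 1)) with 1 by ring. apply sqrt_1. Qed.

Lemma Ci_neq0 : Ci <> C0.
Proof. intro H. assert (snd Ci = snd C0) by (rewrite H; auto). simpl in H0. lra. Qed.

Lemma Cmod_small_0 (x : C) : (forall eps, 0 < eps -> Cmod x <= eps) -> x = C0.
Proof. intros H. apply Cmod_eq_0. pose proof (Cmod_ge_0 x).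
  destruct (Req_dec (Cmod x) 0); auto. specialize (H (Cmod x / 2)). lra. Qed.

Theorem CT q rho0 : 0 < rho0 -> rho0 <= 1 ->
  (forall w, 0 < Cmod w < rho0 -> exists L, Dq q w L) ->
  (forall eps, 0 < eps -> exists delta, 0 < delta /\ forall w, 0 < Cmod w < delta -> Cmod (w * q w)%C <= eps) ->
  forall r, 0 < r < rho0 -> IA q r 0 (2 * PI) = C0.
Proof.
  intros h0 h1 HD Hlim r hr.
  assert (Hs : forall s, 0 < s <= r -> IA q r 0 (2*PI) = IA q s 0 (2*PI)).
  { intros s hs.
    assert (HDs : forall w, s <= Cmod w <= r -> exists L, Dq q w L) by (intros w hw; apply HD; lra).
    pose proof (Goursat q s r 0 (2*PI) ltac:(lra) ltac:(lra) ltac:(lra) ltac:(pose proof PI_RGT_0; lra) HDs) as G.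
    unfold Gam in G.
    assert (IR q 0 s r = IR q (2*PI) s r).
    { unfold IR, Rint. rewrite E_2PI, E_0. reflexivity. }
    rewrite H in G.
    apply (f_equal (fun x => x + IA q s 0 (2*PI))%C) in G.
    replace (IA q r 0 (2 * PI) - IA q s 0 (2 * PI) + IR q (2 * PI) s r - IR q (2 * PI) s r + IA q s 0 (2 * PI))%C
      with (IA q r 0 (2*PI)) in G by ring. rewrite G. ring. }
  apply Cmod_small_0. intros eps he.
  destruct (Hlim (eps / (2*PI))) as [d [hd Hd]]. apply Rdiv_lt_0_compat; auto. pose proof PI_RGT_0; lra.
  set (s := Rmin r (d/2)).
  assert (hs : 0 < s <= r) by (split; [apply Rmin_glb_lt; lra | apply Rmin_l]).
  assert (hsd : s < d) by (apply Rle_lt_trans with (d/2); [apply Rmin_r|lra]).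
  rewrite (Hs s hs).
  assert (HDs : forall w, s <= Cmod w <= s -> exists L, Dq q w L) by (intros w hw; apply HD; lra).
  pose proof (ex_IA q s s ltac:(lra) HDs s 0 (2*PI) ltac:(lra) ltac:(pose proof PI_RGT_0; lra)) as Hex.
  pose proof (RInt_correct _ _ _ Hex) as H1. fold (IA q s 0 (2*PI)) in H1.
  pose proof PI_RGT_0.
  replace eps with ((2*PI - 0) * (eps / (2*PI))) by (field; lra).
  eapply is_RInt_Cnorm; [lra| |apply H1].
  intros t ht. unfold Aint.
  replace (q (RtoC s * E t) * (Ci * RtoC s * E t))%C with (Ci * ((RtoC s * E t) * q (RtoC s * E t)))%C by ring.
  rewrite Cmod_mult, Cmod_Ci, Rmult_1_l. apply Hd. rewrite Cmod_RE, Rabs_right; lra.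
Qed.

Lemma Cpow_mul (a b : C) n : ((a * b) ^ n = a ^ n * b ^ n)%C.
Proof. induction n; simpl. apply C_eq; simpl; ring. rewrite IHn. ring. Qed.

Lemma RtoC_pow r n : RtoC (r ^ n) = (RtoC r ^ n)%C.
Proof. induction n; simpl. auto. rewrite <- IHn. apply C_eq; simpl; ring. Qed.

Lemma Cpow_neq0 (a : C) n : a <> C0 -> (a ^ n)%C <> C0.
Proof. intros h. induction n; simpl. intro H. assert (fst (RtoC 1) = fst C0) by (rewrite H; auto). simpl in H0; lra.
  apply Cmult_neq_0; auto. Qed.

Lemma Cpow_add (a : C) m n : (a ^ (m + n) = a ^ m * a ^ n)%C.
Proof. induction m; simpl. ring. rewrite IHm. ring. Qed.

Lemma E_neq0 t : E t <> C0.
Proof. intro H. pose proof (Cmod_E t). rewrite H, Cmod_0 in H0. lra. Qed.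

Lemma E_inv t : E (-t) = (/ E t)%C.
Proof. pose proof (E_opp t). pose proof (E_neq0 t).
  replace (E (-t)) with (/ E t * (E t * E (-t)))%C by (field; auto). rewrite H. field; auto. Qed.

Lemma Cinv_pow (a : C) n : a <> C0 -> ((/ a) ^ n = / (a ^ n))%C.
Proof. intros h. induction n; simpl. field. rewrite IHn. field. split; auto. apply Cpow_neq0; auto. Qed.

Fixpoint Tp (c : nat -> C) (k : nat) (w : C) : C :=
  match k with O => c O | S m => (Tp c m w + c (S m) * w ^ S m)%C end.

Lemma D_Tp c k w : exists L, Dq (Tp c k) w L.
Proof.
  induction k.
  - exists C0. exact (D_const (c O) w).
  - destruct IHk as [L HL]. eexists.
    exact (D_plus (Tp c k) (fun w => c (S k) * w ^ S k)%C w _ _ HL (D_scal (c (S k)) _ w _ (D_pow k w))).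
Qed.

Lemma is_RInt_mono r j k : (j <= k)%nat ->
  is_RInt (fun t => (RtoC r * E t) ^ j * E (-t) ^ k)%C 0 (2*PI)
    (if Nat.eqb j k then RtoC (2 * PI * r ^ k) else C0).
Proof.
  intros hjk. pose proof PI_RGT_0.
  assert (Hf : forall t, ((RtoC r * E t) ^ j * E (-t) ^ k)%C = (RtoC (r ^ j) * E ((- INR (k - j)) * t))%C).
  { intros t. rewrite Cpow_mul, RtoC_pow. replace (- INR (k - j) * t) with (INR (k - j) * (-t)) by ring.
    rewrite E_nat. replace k with (j + (k - j))%nat at 1 by lia. rewrite Cpow_add.
    rewrite E_inv. assert (E t <> C0) by apply E_neq0.
    rewrite Cinv_pow by auto.
    field. apply Cpow_neq0; auto. }
  destruct (Nat.eqb_spec j k) as [e|e].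
  - subst. eapply is_RInt_Cext. intros t. symmetry. apply Hf.
    replace (k - k)%nat with 0%nat by lia. simpl INR.
    eapply is_RInt_Cext. intros t. replace (- 0 * t) with 0 by ring. rewrite E_0. reflexivity.
    replace (RtoC (2 * PI * r ^ k)) with (RtoC (2*PI - 0) * (RtoC (r ^ k) * RtoC 1))%C by (apply C_eq; simpl; ring).
    apply is_RInt_Cconst.
  - eapply is_RInt_Cext. intros t. symmetry. apply Hf.
    set (m := - INR (k - j)).
    assert (hm : m <> 0). { unfold m. assert (0 < INR (k - j)) by (apply lt_0_INR; lia). lra. }
    pose proof (is_RInt_Cmul _ _ _ _ (RtoC (r ^ j)) (is_RInt_E_lin m 0 (2*PI) hm)) as H1.
    replace C0 with (RtoC (r ^ j) * ((E (m * (2 * PI)) - E (m * 0)) / (Ci * m)))%C. auto.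
    replace (m * 0) with 0 by ring. unfold m. replace (- INR (k - j) * (2 * PI)) with (- (INR (k-j) * (2*PI))) by ring.
    rewrite E_inv, E_2PI_nat, E_0. assert (INR (k - j) <> 0) by (unfold m in hm; lra). apply C_eq; simpl; field; auto.
Qed.

Lemma is_RInt_Cfv (f g : R -> C) a b (l l' : C) : (forall t, f t = g t) -> l = l' -> is_RInt f a b l -> is_RInt g a b l'.
Proof. intros E1 E2 H. subst. eapply is_RInt_Cext; eauto. Qed.

Lemma is_RInt_Tp c r k m : (m <= k)%nat ->
  is_RInt (fun t => Tp c m (RtoC r * E t) * E (-t) ^ k)%C 0 (2*PI)
    (if Nat.eqb m k then RtoC (2 * PI * r ^ k) * c k else C0)%C.
Proof.
  induction m; intros hm.
  - eapply is_RInt_Cfv; [| |exact (is_RInt_Cmul _ _ _ _ (c O) (is_RInt_mono r 0 k hm))].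
    + intros t; simpl. ring.
    + destruct (Nat.eqb_spec 0 k) as [e|e]; subst; simpl; ring.
  - pose proof (IHm ltac:(lia)) as H1.
    pose proof (is_RInt_Cmul _ _ _ _ (c (S m)) (is_RInt_mono r (S m) k hm)) as H2.
    eapply is_RInt_Cfv; [| |exact (is_RInt_Cplus _ _ _ _ _ _ H1 H2)].
    + intros t; simpl. ring.
    + destruct (Nat.eqb_spec m k) as [e|e]; [lia|].
      destruct (Nat.eqb_spec (S m) k) as [e'|e']; subst; ring.
Qed.

Lemma RtoC_neq0 r : r <> 0 -> RtoC r <> C0.
Proof. intros h H. apply h. assert (fst (RtoC r) = fst C0) by (rewrite H; auto). simpl in H0. auto. Qed.

Lemma Coef h rho0 c k : 0 < rho0 -> rho0 <= 1 ->
  (forall w, Cmod w < rho0 -> exists L, Dq h w L) ->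
  (forall eps, 0 < eps -> exists delta, 0 < delta /\ forall w, Cmod w < delta ->
       Cmod (h w - Tp c k w)%C <= eps * Cmod w ^ k) ->
  forall r, 0 < r < rho0 ->
  is_RInt (fun t => h (RtoC r * E t) * E (-t) ^ k)%C 0 (2*PI) (RtoC (2 * PI * r ^ k) * c k)%C.
Proof.
  intros h0 h1 Hh Ho r hr.
  set (q := fun w => ((h w - Tp c k w) * / (w ^ S k))%C).
  assert (HDq : forall w, 0 < Cmod w < rho0 -> exists L, Dq q w L).
  { intros w hw. destruct (Hh w ltac:(lra)) as [L1 H1]. destruct (D_Tp c k w) as [L2 H2].
    assert (wn : w <> C0) by (apply Cmod_gt_0; lra).
    eexists. unfold q.
    exact (D_mult (fun w => h w - Tp c k w)%C (fun w => / (w ^ S k))%C w _ _ (D_minus _ _ _ _ _ H1 H2)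
      (D_inv (fun w => w ^ S k)%C w _ (D_pow k w) (Cpow_neq0 w (S k) wn))). }
  assert (Hlim : forall eps, 0 < eps -> exists delta, 0 < delta /\ forall w, 0 < Cmod w < delta -> Cmod (w * q w)%C <= eps).
  { intros eps he. destruct (Ho eps he) as [d [hd Hd]]. exists d; split; auto. intros w hw.
    assert (wn : w <> C0) by (apply Cmod_gt_0; lra).
    unfold q. replace (w * ((h w - Tp c k w) * / w ^ S k))%C with ((h w - Tp c k w) / w ^ k)%C.
    rewrite Cmod_div by (apply Cpow_neq0; auto). rewrite Cmod_pow.
    assert (0 < Cmod w ^ k) by (apply pow_lt; lra).
    apply Rmult_le_reg_r with (Cmod w ^ k); auto. unfold Rdiv. rewrite Rmult_assoc, Rinv_l by lra.
    rewrite Rmult_1_r. apply Hd; lra.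
    simpl. field. split; auto. apply Cpow_neq0; auto. }
  pose proof (CT q rho0 h0 h1 HDq Hlim r hr) as HC.
  assert (HDr : forall w, r <= Cmod w <= r -> exists L, Dq q w L) by (intros; apply HDq; lra).
  pose proof PI_RGT_0.
  pose proof (ex_IA q r r ltac:(lra) HDr r 0 (2*PI) ltac:(lra) ltac:(lra)) as Hex.
  pose proof (RInt_correct _ _ _ Hex) as H1. fold (IA q r 0 (2*PI)) in H1. rewrite HC in H1.
  pose proof (is_RInt_Cmul _ _ _ _ (RtoC (r ^ k) / Ci)%C H1) as H2.
  pose proof (is_RInt_Tp c r k k (Nat.le_refl k)) as H3. rewrite Nat.eqb_refl in H3.
  eapply is_RInt_Cfv; [| |exact (is_RInt_Cplus _ _ _ _ _ _ H2 H3)].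
  - intros t. unfold Aint, q. rewrite Cpow_mul, E_inv, Cinv_pow by apply E_neq0.
    rewrite RtoC_pow. simpl Cpow.
    assert (E t <> C0) by apply E_neq0. assert (RtoC r <> C0) by (apply RtoC_neq0; lra).
    field. repeat split; auto; try apply Cpow_neq0; auto. apply Ci_neq0.
  - ring.
Qed.

Lemma pow_le_one x n : 0 <= x <= 1 -> x ^ n <= 1.
Proof. intros hx. induction n; simpl. lra. assert (0 <= x ^ n) by (apply pow_le; lra). nra. Qed.

Lemma D_powN n w : exists L, Dq (fun w => w ^ n)%C w L.
Proof. destruct n. exists C0. exact (D_const (RtoC 1) w). eexists. apply D_pow. Qed.

Lemma Dq_bnd h z L : Dq h z L -> exists delta M, 0 < delta /\ forall w, Cmod (w - z) < delta -> Cmod (h w) <= M.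
Proof. intros H. destruct (Dq_cont h z L H 1) as [d [hd Hd]]; [lra|].
  exists d, (Cmod (h z) + 1). split; auto. intros w hw. specialize (Hd w hw).
  replace (h w) with (h z + (h w - h z))%C by ring. eapply Rle_trans. apply Cmod_triangle. lra. Qed.

Lemma Orth h rho0 m : 0 < rho0 -> rho0 <= 1 ->
  (forall w, Cmod w < rho0 -> exists L, Dq h w L) ->
  forall r, 0 < r < rho0 -> is_RInt (fun t => h (RtoC r * E t) * E t ^ S m)%C 0 (2*PI) C0.
Proof.
  intros h0 h1 Hh r hr.
  set (q := fun w => (h w * w ^ m)%C).
  assert (HDq : forall w, 0 < Cmod w < rho0 -> exists L, Dq q w L).
  { intros w hw. destruct (Hh w ltac:(lra)) as [L1 H1]. destruct (D_powN m w) as [L2 H2].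
    eexists. exact (D_mult h (fun w => w ^ m)%C w _ _ H1 H2). }
  assert (Hlim : forall eps, 0 < eps -> exists delta, 0 < delta /\ forall w, 0 < Cmod w < delta -> Cmod (w * q w)%C <= eps).
  { intros eps he. destruct (Hh C0 ltac:(rewrite Cmod_0; lra)) as [L0 H0].
    destruct (Dq_bnd h C0 L0 H0) as [d [M [hd Hd]]].
    assert (hM : 0 <= M). { pose proof (Hd C0 ltac:(replace (C0 - C0)%C with C0 by ring; rewrite Cmod_0; lra)).
      pose proof (Cmod_ge_0 (h C0)). lra. }
    exists (Rmin (Rmin d 1) (eps / (M + 1))). split. repeat apply Rmin_glb_lt; try lra. apply Rdiv_lt_0_compat; lra.
    intros w hw. unfold q.
    assert (w1 : Cmod w < d) by (eapply Rlt_le_trans; [apply hw|]; eapply Rle_trans; apply Rmin_l).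
    assert (w2 : Cmod w < 1) by (eapply Rlt_le_trans; [apply hw|]; eapply Rle_trans; [apply Rmin_l|apply Rmin_r]).
    assert (w3 : Cmod w < eps / (M+1)) by (eapply Rlt_le_trans; [apply hw|]; apply Rmin_r).
    replace (w * (h w * w ^ m))%C with (h w * (w * w ^ m))%C by ring.
    rewrite Cmod_mult, Cmod_mult, Cmod_pow.
    assert (Cmod (h w) <= M) by (apply Hd; replace (w - C0)%C with w by ring; auto).
    assert (Cmod w ^ m <= 1) by (apply pow_le_one; split; [apply Cmod_ge_0|lra]).
    assert (0 <= Cmod w ^ m) by (apply pow_le; apply Cmod_ge_0).
    pose proof (Cmod_ge_0 w). pose proof (Cmod_ge_0 (h w)).
    assert (Cmod w * Cmod w ^ m <= Cmod w) by (apply Rle_trans with (Cmod w * 1); [apply Rmult_le_compat_l|]; lra).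
    apply Rle_trans with (M * Cmod w). apply Rmult_le_compat; auto. apply Rmult_le_pos; auto.
    apply Rle_trans with ((M + 1) * (eps / (M + 1))). nra. right; field; lra. }
  pose proof (CT q rho0 h0 h1 HDq Hlim r hr) as HC.
  assert (HDr : forall w, r <= Cmod w <= r -> exists L, Dq q w L) by (intros; apply HDq; lra).
  pose proof PI_RGT_0.
  pose proof (ex_IA q r r ltac:(lra) HDr r 0 (2*PI) ltac:(lra) ltac:(lra)) as Hex.
  pose proof (RInt_correct _ _ _ Hex) as H1. fold (IA q r 0 (2*PI)) in H1. rewrite HC in H1.
  pose proof (is_RInt_Cmul _ _ _ _ (/ (Ci * RtoC r ^ S m))%C H1) as H2.
  assert (RtoC r <> C0) by (apply RtoC_neq0; lra).
  eapply is_RInt_Cfv; [| |exact H2].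
  - intros t. unfold Aint, q. rewrite Cpow_mul. simpl Cpow.
    field. split. apply Cpow_neq0; auto. split; auto. apply Ci_neq0.
  - ring.
Qed.

Lemma D_shift h z w L : Dq h (z + w)%C L -> Dq (fun v => h (z + v))%C w L.
Proof. intros H. eapply S_ext; [|apply H]. intros k. simpl. replace (z + (w + k))%C with (z + w + k)%C by ring. reflexivity. Qed.

Lemma Cest h dh z rho0 r M : 0 < r -> r < rho0 -> rho0 <= 1 ->
  (forall v, Cmod (v - z) < rho0 -> Dq h v (dh v)) ->
  (forall t, Cmod (h (z + RtoC r * E t)%C) <= M) ->
  Cmod (dh z) <= M / r.
Proof.
  intros hr hr0 h1 Hh HM.
  set (c := fun n => match n with O => h z | _ => dh z end).
  assert (H := Coef (fun v => h (z + v))%C rho0 c 1 ltac:(lra) h1).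
  assert (HD : forall w, Cmod w < rho0 -> exists L, Dq (fun v => h (z + v))%C w L).
  { intros w hw. exists (dh (z + w)%C). apply D_shift. apply Hh. replace (z + w - z)%C with w by ring. auto. }
  assert (Ho : forall eps, 0 < eps -> exists delta, 0 < delta /\ forall w, Cmod w < delta ->
       Cmod (h (z + w) - Tp c 1 w)%C <= eps * Cmod w ^ 1).
  { intros eps he. assert (Hz := Hh z ltac:(replace (z - z)%C with C0 by ring; rewrite Cmod_0; lra)).
    destruct (Hz eps he) as [d [hd Hd]]. exists d; split; auto. intros w hw.
    simpl. rewrite Rmult_1_r. replace (h z + dh z * (w * 1))%C with (h z + dh z * w)%C by ring.
    replace (h (z + w) - (h z + dh z * w))%C with (h (z + w) - h z - dh z * w)%C by ring. auto. }
  specialize (H HD Ho r ltac:(lra)).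
  pose proof PI_RGT_0.
  assert (Cmod (RtoC (2 * PI * r ^ 1) * c 1%nat)%C <= (2 * PI - 0) * M).
  { eapply is_RInt_Cnorm; [lra| |exact H]. intros t _. cbv beta. rewrite Cmod_mult. simpl Cpow. rewrite Cmult_1_r, Cmod_E, Rmult_1_r. apply HM. }
  rewrite Cmod_mult, Cmod_R in H1. simpl c in H1. rewrite Rabs_right in H1 by (simpl; nra).
  apply Rmult_le_reg_l with (2 * PI * r). nra.
  replace (2 * PI * r * (M / r)) with ((2 * PI - 0) * M) by (field; lra). simpl in H1. lra.
Qed.

Definition Oh (h : C -> C) (c : nat -> C) (k : nat) := forall eps, 0 < eps -> exists delta, 0 < delta /\
  forall w, Cmod w < delta -> Cmod (h w - Tp c k w)%C <= eps * Cmod w ^ k.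

Lemma o_down h c k : Oh h c (S k) -> Oh h c k.
Proof.
  intros H eps he. destruct (H (eps/2)) as [d [hd Hd]]; [lra|].
  set (a := Cmod (c (S k))). assert (0 <= a) by apply Cmod_ge_0.
  exists (Rmin (Rmin d 1) (eps / (2 * (a + 1)))). split. repeat apply Rmin_glb_lt; try lra. apply Rdiv_lt_0_compat; lra.
  intros w hw.
  assert (w1 : Cmod w < d) by (eapply Rlt_le_trans; [apply hw|]; eapply Rle_trans; apply Rmin_l).
  assert (w2 : Cmod w < 1) by (eapply Rlt_le_trans; [apply hw|]; eapply Rle_trans; [apply Rmin_l|apply Rmin_r]).
  assert (w3 : Cmod w < eps / (2 * (a + 1))) by (eapply Rlt_le_trans; [apply hw|]; apply Rmin_r).
  specialize (Hd w w1). simpl Tp in Hd.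
  replace (h w - Tp c k w)%C with ((h w - (Tp c k w + c (S k) * w ^ S k)) + c (S k) * w ^ S k)%C by ring.
  eapply Rle_trans. apply Cmod_triangle. rewrite Cmod_mult, Cmod_pow. fold a.
  simpl pow in *. pose proof (Cmod_ge_0 w). assert (0 <= Cmod w ^ k) by (apply pow_le; lra).
  assert (a * Cmod w <= eps / 2).
  { apply Rle_trans with ((a + 1) * (eps / (2 * (a + 1)))). nra. right; field; lra. }
  assert (Cmod w * Cmod w ^ k <= Cmod w ^ k) by nra.
  assert (a * (Cmod w * Cmod w ^ k) <= eps / 2 * Cmod w ^ k) by nra.
  assert (eps / 2 * (Cmod w * Cmod w ^ k) <= eps / 2 * Cmod w ^ k) by (apply Rmult_le_compat_l; lra).
  change (w ^ S k)%C with (w * w ^ k)%C. lra.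
Qed.

Lemma is_RInt_conj (f : R -> C) a b (l : C) : is_RInt f a b l -> is_RInt (fun t => Cconj (f t)) a b (Cconj l).
Proof.
  intros H. apply is_RInt_fct_extend_pair; simpl.
  apply (is_RInt_fct_extend_fst f a b l H).
  apply (is_RInt_opp (V:=R_NormedModule) _ _ _ _ (is_RInt_fct_extend_snd f a b l H)).
Qed.

Lemma is_RInt_Rfv (f g : R -> R) a b (l l' : R) : (forall t, f t = g t) -> l = l' -> is_RInt f a b l -> is_RInt g a b l'.
Proof. intros E1 E2 H. subst. apply (is_RInt_ext f); auto. Qed.

Lemma conj_E t : Cconj (E t) = E (- t).
Proof. apply C_eq; simpl. rewrite cos_neg; auto. rewrite sin_neg; auto. Qed.

Lemma Cara_r P c k : (1 <= k)%nat ->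
  (forall w, Cmod w < 1 -> exists L, Dq P w L) -> (forall w, Cmod w < 1 -> 0 < fst (P w)) ->
  Oh P c k -> Oh P c 0 -> c O = RtoC 1 ->
  forall r, 0 < r < 1 -> Cmod (c k) * r ^ k <= 2.
Proof.
  intros hk HD Hpos Hk H0 hc0 r hr. pose proof PI_RGT_0.
  pose proof (Coef P 1 c k ltac:(lra) ltac:(lra) HD Hk r hr) as A.
  destruct k as [|m]; [lia|].
  pose proof (Orth P 1 m ltac:(lra) ltac:(lra) HD r hr) as B.
  pose proof (Coef P 1 c 0 ltac:(lra) ltac:(lra) HD H0 r hr) as C.
  pose proof (is_RInt_conj _ _ _ _ B) as B'.
  pose proof (is_RInt_Cmul _ _ _ _ (/ RtoC 2)%C (is_RInt_Cplus _ _ _ _ _ _ A B')) as AB.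
  assert (Cr : is_RInt (fun t => fst (P (RtoC r * E t)%C)) 0 (2*PI) (2 * PI)).
  { pose proof (is_RInt_fct_extend_fst _ _ _ _ C) as C1.
    eapply is_RInt_Rfv; [| |exact C1]. intros t. simpl. ring. rewrite hc0. simpl. ring. }
  assert (F1 : is_RInt (fun t => RtoC (fst (P (RtoC r * E t)%C)) * E (- t) ^ S m)%C 0 (2*PI) (RtoC (PI * r ^ S m) * c (S m))%C).
  { eapply is_RInt_Cfv; [| |exact AB].
    - intros t. cbv beta. rewrite Cmult_conj, Cpow_conj, conj_E.
      set (u := P (RtoC r * E t)%C). set (X := (E (- t) ^ S m)%C).
      replace (RtoC (fst u)) with ((u + Cconj u) / 2)%C by (apply C_eq; simpl; field).
      field.
    - apply C_eq; simpl; field. }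
  assert (NR : Cmod (RtoC (PI * r ^ S m) * c (S m))%C <= 2 * PI).
  { rewrite <- norm_C. apply (norm_RInt_le (V:=C_R_NormedModule) (fun t => RtoC (fst (P (RtoC r * E t)%C)) * E (- t) ^ S m)%C (fun t => fst (P (RtoC r * E t)%C)) 0 (2*PI) _ (2*PI)); [lra| |exact F1|exact Cr].
    intros t ht. rewrite norm_C, Cmod_mult, Cmod_R, Cmod_pow, Cmod_E, pow1, Rmult_1_r.
    rewrite Rabs_right; [lra|]. left; apply Hpos; rewrite Cmod_RE, Rabs_right; lra. }
  rewrite Cmod_mult, Cmod_R, Rabs_right in NR.
  2: { assert (0 < r ^ S m) by (apply pow_lt; lra). nra. }
  assert (0 <= r ^ S m) by (apply pow_le; lra).
  apply Rmult_le_reg_l with PI; auto. nra.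
Qed.

Lemma Cara P p1 p2 :
  (forall w, Cmod w < 1 -> exists L, Dq P w L) -> (forall w, Cmod w < 1 -> 0 < fst (P w)) ->
  Oh P (fun n => match n with O => RtoC 1 | 1%nat => p1 | _ => p2 end) 2 ->
  Cmod p1 <= 2 /\ Cmod p2 <= 2.
Proof.
  intros HD Hpos H2.
  set (c := fun n => match n with O => RtoC 1 | 1%nat => p1 | _ => p2 end) in *.
  pose proof (o_down _ _ _ H2) as H1. pose proof (o_down _ _ _ H1) as H0.
  assert (lim : forall p k, (1 <= k <= 2)%nat -> (forall r, 0 < r < 1 -> p * r ^ k <= 2) -> 0 <= p -> p <= 2).
  { intros p k hk Hr hp. destruct (Rle_or_lt p 2) as [h|h]; auto. exfalso.
    set (x := 2 / p). assert (0 < x < 1). { unfold x; split. apply Rdiv_lt_0_compat; lra.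
      apply Rmult_lt_reg_r with p. lra. unfold Rdiv. rewrite Rmult_assoc, Rinv_l by lra. lra. }
    set (r := (3 + x) / 4). specialize (Hr r ltac:(unfold r; lra)).
    assert (r * r <= r ^ k). { destruct k as [|[|[|k]]]; try lia; simpl; unfold r; nra. }
    assert (x < r * r) by (unfold r; nra).
    assert (p * x = 2) by (unfold x; field; lra). nra. }
  split.
  - apply (lim _ 1%nat); [lia| |apply Cmod_ge_0]. intros r hr. apply (Cara_r P c 1); auto.
  - apply (lim _ 2%nat); [lia| |apply Cmod_ge_0]. intros r hr. apply (Cara_r P c 2); auto.
Qed.

Definition On (n : nat) (f : C -> C) := exists K delta, 0 < delta /\ forall z, Cmod z < delta -> Cmod (f z) <= K * Cmod z ^ n.

Lemma On_K n f : On n f -> exists K delta, 0 <= K /\ 0 < delta /\ forall z, Cmod z < delta -> Cmod (f z) <= K * Cmod z ^ n.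
Proof. intros [K [d [hd H]]]. exists (Rabs K), d. split. apply Rabs_pos. split; auto. intros z hz.
  eapply Rle_trans. apply H; auto. apply Rmult_le_compat_r. apply pow_le, Cmod_ge_0. apply Rle_abs. Qed.

Lemma On_ext n f g d0 : 0 < d0 -> (forall z, Cmod z < d0 -> f z = g z) -> On n f -> On n g.
Proof. intros h0 E1 [K [d [hd H]]]. exists K, (Rmin d d0). split. apply Rmin_glb_lt; auto.
  intros z hz. rewrite <- E1. apply H. eapply Rlt_le_trans; [apply hz|apply Rmin_l].
  eapply Rlt_le_trans; [apply hz|apply Rmin_r]. Qed.

Lemma On_plus n f g : On n f -> On n g -> On n (fun z => f z + g z)%C.
Proof. intros [K1 [d1 [h1 H1]]] [K2 [d2 [h2 H2]]]. exists (K1 + K2), (Rmin d1 d2). split. apply Rmin_glb_lt; auto.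
  intros z hz. eapply Rle_trans. apply Cmod_triangle.
  pose proof (H1 z (Rlt_le_trans _ _ _ hz (Rmin_l _ _))). pose proof (H2 z (Rlt_le_trans _ _ _ hz (Rmin_r _ _))). lra. Qed.

Lemma On_opp n f : On n f -> On n (fun z => - f z)%C.
Proof. intros [K [d [hd H]]]. exists K, d. split; auto. intros z hz. rewrite Cmod_opp. auto. Qed.

Lemma On_minus n f g : On n f -> On n g -> On n (fun z => f z - g z)%C.
Proof. intros. apply On_plus; auto. apply On_opp; auto. Qed.

Lemma On_mul m n f g : On m f -> On n g -> On (m + n) (fun z => f z * g z)%C.
Proof. intros Hf Hg. destruct (On_K _ _ Hf) as [K1 [d1 [k1 [h1 H1]]]]. destruct (On_K _ _ Hg) as [K2 [d2 [k2 [h2 H2]]]].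
  exists (K1 * K2), (Rmin d1 d2). split. apply Rmin_glb_lt; auto.
  intros z hz. rewrite Cmod_mult, pow_add.
  pose proof (H1 z (Rlt_le_trans _ _ _ hz (Rmin_l _ _))). pose proof (H2 z (Rlt_le_trans _ _ _ hz (Rmin_r _ _))).
  replace (K1 * K2 * (Cmod z ^ m * Cmod z ^ n)) with ((K1 * Cmod z ^ m) * (K2 * Cmod z ^ n)) by ring.
  apply Rmult_le_compat; auto; apply Cmod_ge_0. Qed.

Lemma On_cmul n c f : On n f -> On n (fun z => c * f z)%C.
Proof. intros [K [d [hd H]]]. exists (Cmod c * K), d. split; auto. intros z hz. rewrite Cmod_mult, Rmult_assoc.
  apply Rmult_le_compat_l. apply Cmod_ge_0. auto. Qed.

Lemma On_zpow n : On n (fun z => z ^ n)%C.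
Proof. exists 1, 1. split; [lra|]. intros z _. rewrite Cmod_pow. lra. Qed.

Lemma On_const c : On 0 (fun _ => c).
Proof. exists (Cmod c), 1. split; [lra|]. intros. simpl. lra. Qed.

Lemma On_weak n f : On (S n) f -> On n f.
Proof. intros Hf. destruct (On_K _ _ Hf) as [K [d [k [hd H]]]]. exists K, (Rmin d 1). split. apply Rmin_glb_lt; lra.
  intros z hz. pose proof (H z (Rlt_le_trans _ _ _ hz (Rmin_l _ _))). pose proof (Rlt_le_trans _ _ _ hz (Rmin_r _ _)).
  simpl in H0. pose proof (Cmod_ge_0 z). assert (0 <= Cmod z ^ n) by (apply pow_le; lra).
  eapply Rle_trans. apply H0. apply Rmult_le_compat_l; auto. nra. Qed.

Lemma On_weak_le m n f : (m <= n)%nat -> On n f -> On m f.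
Proof. intros h. induction h; auto. intros; apply IHh, On_weak; auto. Qed.

Lemma On_zero f : On 1 f -> forall eps, 0 < eps -> exists delta, 0 < delta /\ forall z, Cmod z < delta -> Cmod (f z) < eps.
Proof. intros Hf eps he. destruct (On_K _ _ Hf) as [K [d [k [hd H]]]].
  exists (Rmin d (eps / (K + 1))). split. apply Rmin_glb_lt; auto. apply Rdiv_lt_0_compat; lra.
  intros z hz. pose proof (H z (Rlt_le_trans _ _ _ hz (Rmin_l _ _))). pose proof (Rlt_le_trans _ _ _ hz (Rmin_r _ _)).
  simpl in H0. rewrite Rmult_1_r in H0. pose proof (Cmod_ge_0 z).
  eapply Rle_lt_trans. apply H0. apply Rle_lt_trans with ((K + 1) * Cmod z). nra.
  apply Rmult_lt_reg_r with (/ (K+1)). apply Rinv_0_lt_compat; lra.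
  rewrite (Rmult_comm (K + 1)), Rmult_assoc, Rinv_r by lra. lra. Qed.

Lemma On_comp n e w : (exists K delta, 0 < delta /\ forall u, Cmod u < delta -> Cmod (e u) <= K * Cmod u ^ n) ->
  On 1 w -> On n (fun z => e (w z)).
Proof.
  intros [K1 [d1 [h1 H1]]] Hw. destruct (On_K _ _ Hw) as [K [d [k [hd H]]]].
  destruct (On_zero w Hw d1 h1) as [d2 [hd2 H2]].
  exists (Rabs K1 * K ^ n), (Rmin d d2). split. apply Rmin_glb_lt; auto.
  intros z hz. pose proof (H z (Rlt_le_trans _ _ _ hz (Rmin_l _ _))). pose proof (H2 z (Rlt_le_trans _ _ _ hz (Rmin_r _ _))).
  simpl in H0. rewrite Rmult_1_r in H0.
  eapply Rle_trans. apply H1; auto. rewrite Rmult_assoc. rewrite <- Rpow_mult_distr.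
  apply Rle_trans with (Rabs K1 * Cmod (w z) ^ n). apply Rmult_le_compat_r. apply pow_le, Cmod_ge_0. apply Rle_abs.
  apply Rmult_le_compat_l. apply Rabs_pos. apply pow_incr. split; auto. apply Cmod_ge_0.
Qed.

Lemma On_Oh h c k : On (S k) (fun z => h z - Tp c k z)%C -> Oh h c k.
Proof.
  intros Hf eps he. destruct (On_K _ _ Hf) as [K [d [k0 [hd H]]]].
  exists (Rmin d (eps / (K + 1))). split. apply Rmin_glb_lt; auto. apply Rdiv_lt_0_compat; lra.
  intros z hz. pose proof (H z (Rlt_le_trans _ _ _ hz (Rmin_l _ _))). pose proof (Rlt_le_trans _ _ _ hz (Rmin_r _ _)).
  simpl in H0. pose proof (Cmod_ge_0 z). assert (0 <= Cmod z ^ k) by (apply pow_le; lra).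
  eapply Rle_trans. apply H0. rewrite <- Rmult_assoc. apply Rmult_le_compat_r; auto.
  apply Rle_trans with ((K + 1) * (eps / (K + 1))). nra. right; field; lra. Qed.

Definition has_seriesC (c : nat -> C) (h : C -> C) := forall z, Cmod z < 1 ->
  forall eps, 0 < eps -> exists N, forall n, (n >= N)%nat -> Cmod (Tp c n z - h z)%C < eps.

Lemma sum_ge_term f N j : (forall i, 0 <= f i) -> (j <= N)%nat -> f j <= sum_f_R0 f N.
Proof. intros Hf hj. induction N. replace j with 0%nat by lia. simpl. lra.
  destruct (Nat.eq_dec j (S N)). subst. simpl. pose proof (cond_pos_sum f N Hf). lra.
  simpl. pose proof (IHN ltac:(lia)). pose proof (Hf (S N)). lra. Qed.

Lemma tail c h k : has_seriesC c h -> On (S k) (fun z => h z - Tp c k z)%C.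
Proof.
  intros HS.
  set (rho := RtoC (1/2)).
  assert (hr : Cmod rho = 1/2) by (unfold rho; rewrite Cmod_R, Rabs_right; lra).
  destruct (HS rho ltac:(lra) 1 ltac:(lra)) as [N HN].
  set (M := 2 + sum_f_R0 (fun i => Cmod (c i) * (1/2) ^ i) N).
  assert (hpos : forall i, 0 <= Cmod (c i) * (1/2) ^ i) by (intros; apply Rmult_le_pos; [apply Cmod_ge_0|apply pow_le; lra]).
  assert (HM : forall j, Cmod (c j) * (1/2) ^ j <= M).
  { intros j. destruct (Compare_dec.le_lt_dec j N) as [hj|hj].
    - pose proof (sum_ge_term (fun i => Cmod (c i) * (1/2) ^ i) N j hpos hj). unfold M. lra.
    - destruct j as [|n]; [lia|].
      pose proof (HN (S n) ltac:(lia)). pose proof (HN n ltac:(lia)).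
      assert (E1 : (c (S n) * rho ^ S n)%C = ((Tp c (S n) rho - h rho) - (Tp c n rho - h rho))%C) by (simpl; ring).
      assert (Cmod (c (S n) * rho ^ S n)%C < 2).
      { rewrite E1. eapply Rle_lt_trans. apply Cmod_minus_le. lra. }
      rewrite Cmod_mult, Cmod_pow, hr in H1. unfold M. pose proof (cond_pos_sum _ N hpos). lra. }
  assert (hM0 : 0 <= M) by (pose proof (HM 0%nat); pose proof (hpos 0%nat); lra).
  exists (2 * M * 2 ^ S k), (1/4). split; [lra|].
  intros z hz. set (x := 2 * Cmod z). assert (hx : 0 <= x <= 1/2) by (unfold x; pose proof (Cmod_ge_0 z); lra).
  assert (Hterm : forall j, Cmod (c j * z ^ j)%C <= M * x ^ j).
  { intros j. rewrite Cmod_mult, Cmod_pow. pose proof (HM j).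
    replace (Cmod z ^ j) with ((1/2) ^ j * x ^ j) by (unfold x; rewrite <- Rpow_mult_distr; f_equal; field).
    rewrite <- Rmult_assoc. apply Rmult_le_compat_r. apply pow_le; lra. auto. }
  assert (Hd : forall d, Cmod (Tp c (k + d) z - Tp c k z)%C <= M * x ^ S k * (2 - 2 * (1/2) ^ d)).
  { induction d.
    - rewrite Nat.add_0_r. replace (Tp c k z - Tp c k z)%C with C0 by ring. rewrite Cmod_0. simpl.
      assert (0 <= x ^ S k) by (apply pow_le; lra). nra.
    - replace (k + S d)%nat with (S (k + d)) by lia.
      change (Tp c (S (k+d)) z) with (Tp c (k+d) z + c (S (k+d)) * z ^ S (k+d))%C.
      replace (Tp c (k + d) z + c (S (k + d)) * z ^ S (k + d) - Tp c k z)%C with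
        ((Tp c (k + d) z - Tp c k z) + c (S (k + d)) * z ^ S (k + d))%C by ring.
      eapply Rle_trans. apply Cmod_triangle. pose proof (Hterm (S (k + d))).
      assert (x ^ S (k + d) <= x ^ S k * (1/2) ^ d).
      { replace (S (k + d)) with (S k + d)%nat by lia. rewrite pow_add. apply Rmult_le_compat_l. apply pow_le; lra.
        apply pow_incr; lra. }
      assert (0 <= x ^ S k) by (apply pow_le; lra).
      assert (M * x ^ S (k + d) <= M * (x ^ S k * (1/2) ^ d)) by (apply Rmult_le_compat_l; lra).
      change ((1/2) ^ S d) with (1/2 * (1/2) ^ d). assert (0 <= (1/2)^d) by (apply pow_le; lra). nra. }
  assert (Cmod (h z - Tp c k z)%C <= 2 * M * x ^ S k).
  { apply Rnot_lt_le. intro hc. set (g := Cmod (h z - Tp c k z)%C - 2 * M * x ^ S k) in *.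
    destruct (HS z ltac:(lra) g ltac:(unfold g; lra)) as [N' HN'].
    specialize (HN' (k + N')%nat ltac:(lia)). specialize (Hd N').
    assert (0 <= (1/2) ^ N') by (apply pow_le; lra). assert (0 <= x ^ S k) by (apply pow_le; lra).
    assert (M * x ^ S k * (2 - 2 * (1 / 2) ^ N') <= 2 * M * x ^ S k) by (assert (0 <= M * x ^ S k) by (apply Rmult_le_pos; lra); nra).
    assert (T3 : Cmod (h z - Tp c k z)%C <= Cmod (Tp c (k + N') z - h z)%C + Cmod (Tp c (k + N') z - Tp c k z)%C).
    { replace (h z - Tp c k z)%C with (- (Tp c (k + N') z - h z) + (Tp c (k + N') z - Tp c k z))%C by ring.
      eapply Rle_trans. apply Cmod_triangle. rewrite Cmod_opp. lra. }
    unfold g in HN'. lra. }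
  eapply Rle_trans. apply H. unfold x. rewrite Rpow_mult_distr. right; ring.
Qed.

Lemma On_inv1 om : On 1 om -> On 0 (fun z => / (C1 - om z))%C.
Proof.
  intros Ho. destruct (On_zero om Ho (1/2) ltac:(lra)) as [d [hd Hd]].
  exists 2, d. split; auto. intros z hz. simpl. rewrite Rmult_1_r.
  pose proof (Hd z hz).
  assert (h1 : 1/2 <= Cmod (C1 - om z)%C).
  { pose proof (Cmod_minus_le C1 (C1 - om z)%C). replace (C1 - (C1 - om z))%C with (om z) in H0 by ring.
    pose proof (Cmod_triangle (om z) (C1 - om z)%C). replace (om z + (C1 - om z))%C with C1 in H1 by ring.
    rewrite Cmod_R, Rabs_R1 in H1. lra. }
  assert (C1 - om z <> C0)%C. { intro E0. rewrite E0, Cmod_0 in h1. lra. }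
  rewrite Cmod_inv by auto. apply Rle_trans with (/ (1/2)). apply Rinv_le_contravar; lra. lra.
Qed.

Lemma D_at0_On1 om L : Dq om C0 L -> om C0 = C0 -> On 1 om.
Proof.
  intros H h0. destruct (D_lip om C0 L H) as [d [hd Hd]]. exists (Cmod L + 1), d. split; auto.
  intros z hz. specialize (Hd z hz). replace (C0 + z)%C with z in Hd by ring. rewrite h0 in Hd.
  replace (om z - C0)%C with (om z) in Hd by ring. simpl. lra.
Qed.

Lemma Re_mobius (w : C) : Cmod w < 1 -> 0 < fst ((C1 + w) * / (C1 - w))%C.
Proof.
  intros h. destruct w as [x y]. unfold Cmod in h; simpl in h.
  assert (x * (x * 1) + y * (y * 1) < 1).
  { apply Rnot_le_lt. intro H. assert (1 <= sqrt (x * (x * 1) + y * (y * 1))) by (apply Rle_trans with (sqrt 1); [rewrite sqrt_1; lra| apply sqrt_le_1_alt; lra]). lra. }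
  simpl. set (D := (1 + - x) * ((1 + - x) * 1) + (0 + - y) * ((0 + - y) * 1)).
  assert (0 < D) by (unfold D; nra).
  replace ((1 + x) * ((1 + - x) / D) - (0 + y) * (- (0 + - y) / D))
    with ((1 - x * x - y * y) / D) by (field; lra).
  apply Rdiv_lt_0_compat; nra.
Qed.

Lemma Sub (phi : C -> C) (Bc : nat -> C) (g om : C -> C) (g1 g2 : C) (b1 : R) :
  has_seriesC Bc phi -> Bc O = C1 -> Bc 1%nat = RtoC b1 -> 0 < b1 ->
  On 3 (fun z => g z - (C1 + g1 * z + g2 * z ^ 2))%C ->
  (forall w, Cmod w < 1 -> exists L, Dq om w L) -> (forall w, Cmod w < 1 -> Cmod (om w) < 1) -> om C0 = C0 ->
  (forall z, Cmod z < 1 -> g z = phi (om z)) ->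
  exists c1 c2, g1 = (Bc 1%nat * c1)%C /\ g2 = (Bc 1%nat * c2 + Bc 2%nat * (c1 * c1))%C /\ Cmod c1 <= 1 /\ Cmod (c2 + c1 * c1)%C <= 1.
Proof.
  intros HS hB0 hB1 hb1 Hg HD Hin h0 Hsub.
  set (B1 := Bc 1%nat). set (B2 := Bc 2%nat).
  assert (nB1 : B1 <> C0) by (unfold B1; rewrite hB1; apply RtoC_neq0; lra).
  set (c1 := (g1 / B1)%C). set (c2 := ((g2 - B2 * (c1 * c1)) / B1)%C).
  exists c1, c2.
  assert (E1 : g1 = (B1 * c1)%C) by (unfold c1; field; auto).
  assert (E2 : g2 = (B1 * c2 + B2 * (c1 * c1))%C) by (unfold c2; field; auto).
  split; [exact E1|]. split; [exact E2|].
  destruct (HD C0 ltac:(rewrite Cmod_0; lra)) as [L0 HL0].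
  pose proof (D_at0_On1 om L0 HL0 h0) as Om1.
  assert (Tphi := tail Bc phi 2 HS).
  assert (Ephi : On 3 (fun z => phi (om z) - Tp Bc 2 (om z))%C).
  { apply (On_comp 3 (fun u => phi u - Tp Bc 2 u)%C om); [destruct Tphi as [K [d [hd H]]]; exists K, d; auto | auto]. }
  set (eg := fun z => (g z - (C1 + g1 * z + g2 * z ^ 2))%C).
  set (ep := fun z => (phi (om z) - Tp Bc 2 (om z))%C).
  assert (Rel : forall z, Cmod z < 1 -> (B1 * om z = g1 * z + g2 * z ^ 2 - B2 * (om z * om z) + eg z - ep z)%C).
  { intros z hz. unfold eg, ep. rewrite Hsub by auto. simpl Tp. rewrite hB0. fold B1 B2. simpl. ring. }
  assert (D1 : On 2 (fun z => om z - c1 * z)%C).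
  { apply (On_ext 2 (fun z => / B1 * (g2 * z ^ 2 - B2 * (om z * om z) + eg z - ep z))%C _ 1 ltac:(lra)).
    intros z hz. transitivity (/ B1 * (B1 * om z - g1 * z))%C. rewrite Rel by auto. field. auto.
    unfold c1. field. auto.
    apply On_cmul. apply On_minus. apply On_plus. apply On_minus.
    apply On_cmul. apply On_zpow. apply On_cmul. apply (On_mul 1 1); auto.
    apply On_weak; auto. apply On_weak; auto. }
  assert (Sq : On 3 (fun z => om z * om z - c1 * c1 * z ^ 2)%C).
  { apply (On_ext 3 (fun z => (om z - c1 * z) * (om z + c1 * z))%C _ 1 ltac:(lra)).
    intros z hz. simpl. ring.
    apply (On_mul 2 1); auto. apply On_plus; auto.
    apply On_cmul. apply (On_ext 1 (fun z => z ^ 1)%C _ 1 ltac:(lra)). intros; simpl; ring. apply On_zpow. }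
  assert (D2 : On 3 (fun z => om z - c1 * z - c2 * z ^ 2)%C).
  { apply (On_ext 3 (fun z => / B1 * (- B2 * (om z * om z - c1 * c1 * z ^ 2) + eg z - ep z))%C _ 1 ltac:(lra)).
    intros z hz. transitivity (/ B1 * (B1 * om z - g1 * z - (g2 - B2 * (c1 * c1)) * z ^ 2))%C.
    rewrite Rel by auto. field. auto.
    unfold c2, c1. field. auto.
    apply On_cmul. apply On_minus. apply On_plus. apply On_cmul; auto. auto. auto. }
  set (P := fun w => ((C1 + om w) * / (C1 - om w))%C).
  assert (nz : forall w, Cmod w < 1 -> (C1 - om w)%C <> C0).
  { intros w hw E0. assert (om w = C1). { replace (om w) with (C1 - (C1 - om w))%C by ring. rewrite E0. ring. }
    pose proof (Hin w hw). rewrite H, Cmod_R, Rabs_R1 in H0. lra. }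
  assert (HP : forall w, Cmod w < 1 -> exists L, Dq P w L).
  { intros w hw. destruct (HD w hw) as [L HL]. eexists. unfold P.
    exact (D_mult (fun w => C1 + om w)%C (fun w => / (C1 - om w))%C w _ _ (D_plus _ _ _ _ _ (D_const C1 w) HL)
      (D_inv (fun w => C1 - om w)%C w _ (D_minus _ _ _ _ _ (D_const C1 w) HL) (nz w hw))). }
  assert (HPpos : forall w, Cmod w < 1 -> 0 < fst (P w)) by (intros; apply Re_mobius; auto).
  set (p1 := (RtoC 2 * c1)%C). set (p2 := (RtoC 2 * (c2 + c1 * c1))%C).
  assert (HO : Oh P (fun n => match n with O => RtoC 1 | 1%nat => p1 | _ => p2 end) 2).
  { apply On_Oh.
    set (e := fun z => (om z - c1 * z - c2 * z ^ 2)%C).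
    apply (On_ext 3 (fun z => (RtoC 2 * e z + RtoC 2 * c1 * c2 * z ^ 3 + RtoC 2 * c1 * (z * e z)
        + RtoC 2 * (c2 + c1 * c1) * (z ^ 2 * om z)) * / (C1 - om z))%C _ 1 ltac:(lra)).
    - intros z hz. unfold P, e, p1, p2. simpl Tp. pose proof (nz z hz). simpl. field. auto.
    - apply (On_mul 3 0). 2: apply On_inv1; auto.
      apply On_plus. apply On_plus. apply On_plus.
      apply On_cmul; auto. apply On_cmul, On_zpow.
      apply On_cmul. apply On_weak. apply (On_mul 1 3); auto. apply (On_ext 1 (fun z => z ^ 1)%C _ 1 ltac:(lra)). intros; simpl; ring. apply On_zpow.
      apply On_cmul. apply (On_mul 2 1); auto. apply On_zpow. }
  destruct (Cara P p1 p2 HP HPpos HO) as [C1b C2b].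
  unfold p1, p2 in *. rewrite Cmod_mult, Cmod_R, Rabs_right in C1b, C2b by lra.
  split; lra.
Qed.

Lemma Dq_unique h z L1 L2 : Dq h z L1 -> Dq h z L2 -> L1 = L2.
Proof.
  intros H1 H2. assert (HZ : (L1 - L2)%C = C0).
  2: { replace L1 with ((L1 - L2) + L2)%C by ring. rewrite HZ. ring. }
  apply Cmod_eq_0. apply Rle_antisym; [|apply Cmod_ge_0]. apply Rnot_lt_le. intro hc.
  set (e := Cmod (L1 - L2)%C / 4).
  destruct (H1 e ltac:(unfold e; lra)) as [d1 [hd1 D1]]. destruct (H2 e ltac:(unfold e; lra)) as [d2 [hd2 D2]].
  set (k := RtoC (Rmin d1 d2 / 2)).
  assert (hk : Cmod k = Rmin d1 d2 / 2) by (unfold k; rewrite Cmod_R, Rabs_right; [auto|]; pose proof (Rmin_glb_lt _ _ _ hd1 hd2); lra).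
  pose proof (Rmin_glb_lt _ _ _ hd1 hd2).
  specialize (D1 k ltac:(rewrite hk; pose proof (Rmin_l d1 d2); lra)). specialize (D2 k ltac:(rewrite hk; pose proof (Rmin_r d1 d2); lra)).
  assert (E0 : ((L1 - L2) * k)%C = ((h (z + k) - h z - L2 * k) - (h (z + k) - h z - L1 * k))%C) by ring.
  assert (Cmod ((L1 - L2) * k)%C <= 2 * e * Cmod k). { rewrite E0. eapply Rle_trans. apply Cmod_minus_le. lra. }
  rewrite Cmod_mult in H0. unfold e in H0. rewrite hk in H0. nra.
Qed.

Lemma On_D0 h : On 2 h -> Dq h C0 C0.
Proof.
  intros Hh. destruct (On_K _ _ Hh) as [K [d [k [hd H]]]].
  assert (h0 : h C0 = C0). { apply Cmod_eq_0. pose proof (H C0 ltac:(rewrite Cmod_0; lra)). rewrite Cmod_0 in H0.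
    simpl in H0. pose proof (Cmod_ge_0 (h C0)). lra. }
  apply S_quad. exists d, K. split; auto. intros k0 hk0. rewrite h0.
  replace (h (C0 + k0)%C - C0 - C0 * k0)%C with (h k0) by (replace (C0 + k0)%C with k0 by ring; ring).
  pose proof (H k0 hk0). simpl in H0. lra.
Qed.

Lemma deriv_est h dh : (forall v, Cmod v < 1 -> Dq h v (dh v)) -> On 4 h -> On 3 dh.
Proof.
  intros HD Hh. destruct (On_K _ _ Hh) as [K [d [k [hd H]]]].
  exists (81/8 * K), (Rmin (d/2) (1/2)). split. apply Rmin_glb_lt; lra.
  intros z hz. pose proof (Rlt_le_trans _ _ _ hz (Rmin_l _ _)). pose proof (Rlt_le_trans _ _ _ hz (Rmin_r _ _)).
  destruct (Req_dec (Cmod z) 0) as [z0|z0].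
  - apply Cmod_eq_0 in z0. subst z.
    assert (dh C0 = C0). { apply (Dq_unique h C0). apply HD. rewrite Cmod_0; lra. apply On_D0. apply (On_weak_le 2 4); auto. }
    rewrite H2, Cmod_0. simpl. pose proof (Cmod_ge_0 C0). nra.
  - pose proof (Cmod_ge_0 z). assert (zp : 0 < Cmod z) by lra.
    assert (Hest := Cest h dh z (Cmod z) (Cmod z / 2) (K * (3 * Cmod z / 2) ^ 4) ltac:(lra) ltac:(lra) ltac:(lra)).
    assert (HDz : forall v, Cmod (v - z) < Cmod z -> Dq h v (dh v)).
    { intros v hv. apply HD. replace v with (z + (v - z))%C by ring. eapply Rle_lt_trans. apply Cmod_triangle. lra. }
    specialize (Hest HDz).
    assert (HM : forall t, Cmod (h (z + RtoC (Cmod z / 2) * E t)%C) <= K * (3 * Cmod z / 2) ^ 4).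
    { intros t. assert (hv : Cmod (z + RtoC (Cmod z / 2) * E t)%C <= 3 * Cmod z / 2).
      { eapply Rle_trans. apply Cmod_triangle. rewrite Cmod_RE, Rabs_right; lra. }
      eapply Rle_trans. apply H. lra. apply Rmult_le_compat_l; auto. apply pow_incr. split; auto. apply Cmod_ge_0. }
    specialize (Hest HM). eapply Rle_trans. apply Hest.
    right. field. lra.
Qed.

Lemma Dq_eqL h z L L' : Dq h z L -> L = L' -> Dq h z L'.
Proof. intros H E0. subst. auto. Qed.

Lemma On_at0 n h : (1 <= n)%nat -> On n h -> h C0 = C0.
Proof. intros hn Hh. destruct (On_K _ _ Hh) as [K [d [k [hd H]]]]. apply Cmod_eq_0.
  pose proof (H C0 ltac:(rewrite Cmod_0; lra)). rewrite Cmod_0 in H0. rewrite pow_i in H0 by lia.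
  pose proof (Cmod_ge_0 (h C0)). lra. Qed.

Lemma Cinv_0 : (/ C0)%C = C0.
Proof. apply C_eq; simpl; unfold Rdiv; ring. Qed.

Lemma On_divz n h : On (S n) h -> On n (fun z => h z * / z)%C.
Proof.
  intros Hh. destruct (On_K _ _ Hh) as [K [d [k [hd H]]]]. exists K, d. split; auto. intros z hz.
  destruct (Req_dec (Cmod z) 0) as [z0|z0].
  - apply Cmod_eq_0 in z0. subst. replace (h C0 * / C0)%C with C0 by (rewrite Cinv_0; ring).
    rewrite Cmod_0. apply Rmult_le_pos; auto. apply pow_le; lra.
  - assert (zn : z <> C0) by (intro E0; apply z0; rewrite E0; apply Cmod_0).
    pose proof (Cmod_ge_0 z). rewrite Cmod_mult, Cmod_inv by auto. pose proof (H z hz). simpl in H1.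
    apply Rmult_le_reg_r with (Cmod z). lra. rewrite Rmult_assoc, Rinv_l by lra.
    replace (K * Cmod z ^ n * Cmod z) with (K * (Cmod z * Cmod z ^ n)) by ring. lra.
Qed.

Lemma On_id : On 1 (fun z => z).
Proof. apply (On_ext 1 (fun z => z ^ 1)%C _ 1 ltac:(lra)). intros; simpl; ring. apply On_zpow. Qed.

Lemma D_cubic a2 a3 v : Dq (fun w => w + a2 * w ^ 2 + a3 * w ^ 3)%C v (C1 + RtoC 2 * a2 * v + RtoC 3 * a3 * v ^ 2)%C.
Proof.
  eapply Dq_eqL. exact (D_plus _ _ _ _ _ (D_plus _ _ _ _ _ (D_id v) (D_scal a2 _ v _ (D_pow 1 v))) (D_scal a3 _ v _ (D_pow 2 v))).
  apply C_eq; simpl; ring.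
Qed.

Lemma tail3 f a : has_seriesC a f -> a O = C0 -> a 1%nat = C1 ->
  On 4 (fun z => f z - (z + a 2%nat * z ^ 2 + a 3%nat * z ^ 3))%C.
Proof.
  intros HS h0 h1. apply (On_ext 4 (fun z => f z - Tp a 3 z)%C _ 1 ltac:(lra)).
  intros z _. simpl Tp. rewrite h0, h1. simpl. ring. apply tail; auto.
Qed.

Lemma f_side f df g a : has_seriesC a f -> a O = C0 -> a 1%nat = C1 ->
  (forall v, Cmod v < 1 -> Dq f v (df v)) ->
  (forall z, Cmod z < 1 -> z <> C0 -> g z = (z * df z / f z)%C) -> g C0 = C1 ->
  On 3 (fun z => g z - (C1 + a 2%nat * z + (RtoC 2 * a 3%nat - a 2%nat * a 2%nat) * z ^ 2))%C.
Proof.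
  intros HS h0 h1 Hdf Hg hg0.
  set (a2 := a 2%nat). set (a3 := a 3%nat). set (b := (RtoC 2 * a3 - a2 * a2)%C).
  set (e1 := fun z => (f z - (z + a2 * z ^ 2 + a3 * z ^ 3))%C).
  assert (He1 : On 4 e1) by (apply tail3; auto).
  set (e2 := fun z => (df z - (C1 + RtoC 2 * a2 * z + RtoC 3 * a3 * z ^ 2))%C).
  assert (He2 : On 3 e2).
  { apply (deriv_est e1 e2); auto. intros v hv. apply (D_minus _ _ _ _ _ (Hdf v hv) (D_cubic a2 a3 v)). }
  set (e1' := fun z => (e1 z * / z)%C).
  assert (He1' : On 3 e1') by (apply On_divz; auto).
  set (om := fun z => (- (a2 * z + a3 * z ^ 2 + e1' z))%C).
  assert (Hom : On 1 om).
  { apply On_opp. apply On_plus. apply On_plus. apply On_cmul, On_id. apply On_cmul. apply On_weak, On_zpow.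
    apply (On_weak_le 1 3); auto. }
  destruct (On_zero om Hom (1/2) ltac:(lra)) as [d [hd Hd]].
  apply (On_ext 3 (fun z => (z ^ 3 * (- (a2 * a3 + b * a2) - b * a3 * z) + e2 z - (C1 + a2 * z + b * z ^ 2) * e1' z) * / (C1 - om z))%C _ (Rmin d 1) ltac:(apply Rmin_glb_lt; lra)).
  - intros z hz. pose proof (Rlt_le_trans _ _ _ hz (Rmin_l _ _)). pose proof (Rlt_le_trans _ _ _ hz (Rmin_r _ _)).
    assert (nu : (C1 - om z)%C <> C0).
    { intro E0. pose proof (Hd z H). replace (om z) with C1 in H1 by (replace (om z) with (C1 - (C1 - om z))%C by ring; rewrite E0; ring).
      rewrite Cmod_R, Rabs_R1 in H1. lra. }
    destruct (Req_dec (Cmod z) 0) as [z0|z0].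
    + apply Cmod_eq_0 in z0. subst z. rewrite hg0. unfold e1'. rewrite Cinv_0.
      rewrite (On_at0 3 e2) by (auto; lia). simpl. field. auto.
    + assert (zn : z <> C0) by (intro E0; apply z0; rewrite E0; apply Cmod_0).
      assert (fz : f z = (z * (C1 - om z))%C) by (unfold om, e1', e1; field; auto).
      rewrite Hg by auto. rewrite fz.
      assert (dfz : df z = (e2 z + (C1 + RtoC 2 * a2 * z + RtoC 3 * a3 * z ^ 2))%C) by (unfold e2; ring).
      rewrite dfz. replace (e1' z) with (C1 - om z - (C1 + a2 * z + a3 * z ^ 2))%C by (unfold om; ring).
      unfold b. simpl. field. auto.
  - apply (On_mul 3 0). 2: apply On_inv1; auto.
    apply On_minus. apply On_plus.
    + apply (On_mul 3 0). apply On_zpow. apply On_minus. apply On_const. apply On_weak. apply On_cmul, On_id.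
    + auto.
    + apply (On_mul 0 3); auto. apply On_plus. apply On_plus. apply On_const.
      apply On_weak, On_cmul, On_id. apply On_weak, On_weak, On_cmul, On_zpow.
Qed.

Lemma F_side f a F dF r0 : has_seriesC a f -> a O = C0 -> a 1%nat = C1 ->
  (forall v, Cmod v < 1 -> Dq F v (dF v)) -> 0 < r0 ->
  (forall w, Cmod w < r0 -> f (F w) = w) -> F C0 = C0 ->
  On 3 (fun w => dF w - (C1 - RtoC 2 * a 2%nat * w + (RtoC 6 * a 2%nat * a 2%nat - RtoC 3 * a 3%nat) * w ^ 2))%C.
Proof.
  intros HS h0 h1 HdF hr0 Hinv hF0.
  set (a2 := a 2%nat). set (a3 := a 3%nat). set (b := (RtoC 2 * a2 * a2 - a3)%C).
  set (e1 := fun z => (f z - (z + a2 * z ^ 2 + a3 * z ^ 3))%C).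
  assert (He1 : On 4 e1) by (apply tail3; auto).
  assert (HF1 : On 1 F) by (apply (D_at0_On1 F (dF C0)); auto; apply HdF; rewrite Cmod_0; lra).
  set (e1F := fun w => e1 (F w)).
  assert (He1F : On 4 e1F) by (apply (On_comp 4 e1 F); auto; destruct He1 as [K [d [hd H]]]; exists K, d; auto).
  assert (Rel : forall w, Cmod w < r0 -> e1F w = (w - a2 * (F w * F w) - a3 * (F w * F w * F w) - F w)%C).
  { intros w hw. unfold e1F, e1. rewrite Hinv by auto. simpl. ring. }
  set (d1 := fun w => (F w - w)%C).
  assert (Hd1 : On 2 d1).
  { apply (On_ext 2 (fun w => - (a2 * (F w * F w) + a3 * (F w * F w * F w) + e1F w))%C _ r0 hr0).
    intros w hw. unfold d1. cbv beta. rewrite (Rel w hw). ring.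
    apply On_opp. apply On_plus. apply On_plus. apply On_cmul, (On_mul 1 1); auto.
    apply On_cmul, On_weak, (On_mul 2 1); auto; apply (On_mul 1 1); auto.
    apply On_weak, On_weak; auto. }
  set (d2 := fun w => (F w - w + a2 * w ^ 2)%C).
  assert (Hd2 : On 3 d2).
  { apply (On_ext 3 (fun w => - (a2 * (d1 w * (F w + w)) + a3 * (F w * F w * F w) + e1F w))%C _ r0 hr0).
    intros w hw. unfold d2, d1. cbv beta. rewrite (Rel w hw). simpl. ring.
    apply On_opp. apply On_plus. apply On_plus. apply On_cmul, (On_mul 2 1); auto. apply On_plus; auto. apply On_id.
    apply On_cmul, (On_mul 2 1); auto; apply (On_mul 1 1); auto.
    apply On_weak; auto. }
  set (EF := fun w => (F w - (w + (- a2) * w ^ 2 + b * w ^ 3))%C).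
  assert (HEF : On 4 EF).
  { apply (On_ext 4 (fun w => - a2 * (a2 * a2 * w ^ 4 + d2 w * (F w + w - a2 * w ^ 2))
          - a3 * (d1 w * (F w * F w + F w * w + w * w)) - e1F w)%C _ r0 hr0).
    intros w hw. unfold EF, d2, d1, b. cbv beta. rewrite (Rel w hw). simpl. ring.
    apply On_minus. apply On_minus.
    - apply On_cmul. apply On_plus. apply On_cmul, On_zpow. apply (On_mul 3 1); auto.
      apply On_minus. apply On_plus; auto. apply On_id. apply On_weak, On_cmul, On_zpow.
    - apply On_cmul. apply (On_mul 2 2); auto. apply On_plus. apply On_plus.
      apply (On_mul 1 1); auto. apply (On_mul 1 1); auto. apply On_id. apply (On_mul 1 1); apply On_id.
    - auto. }
  apply (On_ext 3 (fun w => dF w - (C1 + RtoC 2 * (- a2) * w + RtoC 3 * b * w ^ 2))%C _ 1 ltac:(lra)).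
  intros w _. unfold b. ring.
  apply (deriv_est EF); auto. intros v hv. apply (D_minus _ _ _ _ _ (HdF v hv) (D_cubic (- a2) b v)).
Qed.

Lemma Cmod_RtoC r : Cmod (RtoC r) = Rabs r.
Proof. apply Cmod_R. Qed.

Lemma bound_E (b1 b2 : R) c1 c2 : 0 < b1 -> Cmod c1 <= 1 -> Cmod (c2 + c1 * c1)%C <= 1 ->
  Cmod (RtoC b1 * c2 + RtoC b2 * (c1 * c1))%C <= b1 + Rabs (b2 - b1).
Proof.
  intros hb h1 h2.
  replace (RtoC b1 * c2 + RtoC b2 * (c1 * c1))%C with (RtoC b1 * (c2 + c1 * c1) + RtoC (b2 - b1) * (c1 * c1))%C
    by (apply C_eq; simpl; ring).
  eapply Rle_trans. apply Cmod_triangle. rewrite !Cmod_mult, !Cmod_R. rewrite Rabs_right by lra.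
  pose proof (Cmod_ge_0 c1). pose proof (Rabs_pos (b2 - b1)).
  assert (Cmod c1 * Cmod c1 <= 1) by nra. pose proof (Cmod_ge_0 (c2 + c1 * c1)%C). nra.
Qed.

Theorem mainC (phi : C -> C) (Bc : nat -> C) (b1 b2 : R) (a : nat -> C) (f F df dF g om1 om2 : C -> C) (r0 : R) :
  has_seriesC Bc phi -> Bc O = C1 -> Bc 1%nat = RtoC b1 -> 0 < b1 -> Bc 2%nat = RtoC b2 ->
  has_seriesC a f -> a O = C0 -> a 1%nat = C1 ->
  (forall v, Cmod v < 1 -> Dq f v (df v)) -> (forall v, Cmod v < 1 -> Dq F v (dF v)) ->
  0 < r0 -> (forall w, Cmod w < r0 -> f (F w) = w) -> F C0 = C0 ->
  (forall z, Cmod z < 1 -> z <> C0 -> g z = (z * df z / f z)%C) -> g C0 = C1 ->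
  (forall w, Cmod w < 1 -> exists L, Dq om1 w L) -> (forall w, Cmod w < 1 -> Cmod (om1 w) < 1) -> om1 C0 = C0 ->
  (forall z, Cmod z < 1 -> g z = phi (om1 z)) ->
  (forall w, Cmod w < 1 -> exists L, Dq om2 w L) -> (forall w, Cmod w < 1 -> Cmod (om2 w) < 1) -> om2 C0 = C0 ->
  (forall z, Cmod z < 1 -> dF z = phi (om2 z)) ->
  Cmod (a 2%nat) <= sqrt (5 * (b1 + Rabs (b2 - b1))) / 3 /\ Cmod (a 3%nat) <= 7 * (b1 + Rabs (b2 - b1)) / 9.
Proof.
  intros HSB hB0 hB1 hb1 hB2 HSa ha0 ha1 Hdf HdF hr0 Hinv hF0 Hg hg0 HD1 Hin1 h01 Hs1 HD2 Hin2 h02 Hs2.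
  pose proof (f_side f df g a HSa ha0 ha1 Hdf Hg hg0) as Gf.
  pose proof (F_side f a F dF r0 HSa ha0 ha1 HdF hr0 Hinv hF0) as GF.
  destruct (Sub phi Bc g om1 (a 2%nat) (RtoC 2 * a 3%nat - a 2%nat * a 2%nat)%C b1 HSB hB0 hB1 hb1 Gf HD1 Hin1 h01 Hs1)
    as [c1 [c2 [E1 [E2 [C1b C2b]]]]].
  assert (GF' : On 3 (fun w => dF w - (C1 + (- (RtoC 2 * a 2%nat)) * w + (RtoC 6 * a 2%nat * a 2%nat - RtoC 3 * a 3%nat) * w ^ 2))%C).
  { eapply (On_ext 3 _ _ 1 ltac:(lra)); [|exact GF]. intros; cbv beta; ring. }
  destruct (Sub phi Bc dF om2 (- (RtoC 2 * a 2%nat))%C (RtoC 6 * a 2%nat * a 2%nat - RtoC 3 * a 3%nat)%C b1 HSB hB0 hB1 hb1 GF' HD2 Hin2 h02 Hs2)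
    as [d1 [d2 [F1 [F2 [D1b D2b]]]]].
  rewrite hB1, hB2 in *.
  set (M := b1 + Rabs (b2 - b1)).
  pose proof (bound_E b1 b2 c1 c2 hb1 C1b C2b) as BE1. pose proof (bound_E b1 b2 d1 d2 hb1 D1b D2b) as BE2.
  fold M in BE1, BE2. rewrite <- E2 in BE1. rewrite <- F2 in BE2.
  set (a2 := a 2%nat) in *. set (a3 := a 3%nat) in *.
  assert (Q2 : (RtoC 9 * (a2 * a2))%C = (RtoC 3 * (RtoC 2 * a3 - a2 * a2) + RtoC 2 * (RtoC 6 * a2 * a2 - RtoC 3 * a3))%C)
    by (apply C_eq; simpl; ring).
  assert (Q3 : (RtoC 9 * a3)%C = (RtoC 6 * (RtoC 2 * a3 - a2 * a2) + (RtoC 6 * a2 * a2 - RtoC 3 * a3))%C)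
    by (apply C_eq; simpl; ring).
  assert (B2 : 9 * (Cmod a2 * Cmod a2) <= 5 * M).
  { rewrite <- Cmod_mult. replace (9 * Cmod (a2 * a2)%C) with (Cmod (RtoC 9 * (a2 * a2))%C)
      by (rewrite Cmod_mult, Cmod_R, Rabs_right; lra).
    rewrite Q2. eapply Rle_trans. apply Cmod_triangle. rewrite !Cmod_mult, !Cmod_R, !Rabs_right by lra. lra. }
  assert (B3 : 9 * Cmod a3 <= 7 * M).
  { replace (9 * Cmod a3) with (Cmod (RtoC 9 * a3)%C) by (rewrite Cmod_mult, Cmod_R, Rabs_right; lra).
    rewrite Q3. eapply Rle_trans. apply Cmod_triangle. rewrite !Cmod_mult, !Cmod_R, !Rabs_right by lra. lra. }
  split.
  - pose proof (Cmod_ge_0 a2). assert (0 <= 5 * M) by nra.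
    replace (Cmod a2) with (sqrt (9 * (Cmod a2 * Cmod a2)) / 3).
    apply Rmult_le_compat_r. lra. apply sqrt_le_1_alt. lra.
    rewrite sqrt_mult by nra. replace 9 with (3 * 3) by ring. rewrite sqrt_square by lra. rewrite sqrt_square by lra. field.
  - lra.
Qed.

Require Import Defs.
Open Scope R_scope.

Definition toC (z : Cplx) : C := (Re z, Im z).
Definition ofC (c : C) : Cplx := mkC (fst c) (snd c).

Lemma toC_ofC c : toC (ofC c) = c.
Proof. destruct c; reflexivity. Qed.
Lemma ofC_toC z : ofC (toC z) = z.
Proof. destruct z; reflexivity. Qed.

Lemma toC_add z w : toC (Cadd z w) = (toC z + toC w)%C.
Proof. reflexivity. Qed.
Lemma toC_mul z w : toC (Cmul z w) = (toC z * toC w)%C.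
Proof. reflexivity. Qed.
Lemma toC_sub z w : toC (Csub z w) = (toC z - toC w)%C.
Proof. reflexivity. Qed.
Lemma toC_div z w : toC (Defs.Cdiv z w) = (toC z / toC w)%C.
Proof. unfold Defs.Cdiv, Defs.Cinv, toC; simpl. unfold Coquelicot.Complex.Cdiv, Coquelicot.Complex.Cinv; simpl.
  replace (Re w * (Re w * 1) + Im w * (Im w * 1)) with (Re w * Re w + Im w * Im w) by ring.
  apply C_eq; simpl; ring. Qed.
Lemma toC_pow z n : toC (Defs.Cpow z n) = (toC z ^ n)%C.
Proof. induction n; simpl. reflexivity. rewrite toC_mul, IHn. reflexivity. Qed.
Lemma Cnorm_toC z : Cnorm z = Cmod (toC z).
Proof. unfold Cnorm, Cmod, toC; simpl. f_equal. ring. Qed.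
Lemma toC_zero : toC Czero = C0.
Proof. reflexivity. Qed.
Lemma toC_one : toC Cone = C1.
Proof. reflexivity. Qed.
Lemma toC_inj z w : toC z = toC w -> z = w.
Proof. intros H. rewrite <- (ofC_toC z), <- (ofC_toC w), H. reflexivity. Qed.

Definition lift (f : Cplx -> Cplx) : C -> C := fun c => toC (f (ofC c)).

Lemma Cpsum_Tp c z n : toC (Cpsum c z n) = Tp (fun j => toC (c j)) n (toC z).
Proof. induction n. reflexivity.
  change (Cpsum c z (S n)) with (Cadd (Cpsum c z n) (Cmul (c (S n)) (Defs.Cpow z (S n)))).
  change (Tp (fun j => toC (c j)) (S n) (toC z)) with (Tp (fun j => toC (c j)) n (toC z) + toC (c (S n)) * (toC z) ^ (S n))%C.
  rewrite toC_add, toC_mul, toC_pow, IHn. reflexivity. Qed.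

Lemma series_tr c f : has_series c f -> has_seriesC (fun j => toC (c j)) (lift f).
Proof.
  intros H w hw eps he. destruct (H (ofC w) ltac:(unfold inD; rewrite Cnorm_toC, toC_ofC; auto) eps he) as [N HN].
  exists N. intros n hn. specialize (HN n hn). rewrite Cnorm_toC, toC_sub, Cpsum_Tp, toC_ofC in HN. exact HN.
Qed.

Lemma deriv_tr f z L : is_cderiv f z L -> Dq (lift f) (toC z) (toC L).
Proof.
  intros H eps he. destruct (H eps he) as [d [hd Hd]]. exists d. split; auto.
  intros k hk. unfold lift.
  destruct (Req_dec (Cmod k) 0) as [k0|k0].
  - apply Cmod_eq_0 in k0. subst. replace (toC z + C0)%C with (toC z) by ring. rewrite ofC_toC.
    replace (toC (f z) - toC (f z) - toC L * C0)%C with C0 by ring. rewrite Cmod_0. lra.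
  - assert (kn : k <> C0) by (intro E0; apply k0; rewrite E0; apply Cmod_0).
    assert (hne : ofC k <> Czero). { intro E0. apply kn. rewrite <- (toC_ofC k), E0. reflexivity. }
    specialize (Hd (ofC k) hne ltac:(rewrite Cnorm_toC, toC_ofC; auto)).
    rewrite Cnorm_toC, toC_sub, toC_div, toC_sub, toC_ofC in Hd.
    replace (ofC (toC z + k)%C) with (Cadd z (ofC k)) by (apply toC_inj; rewrite toC_add, !toC_ofC; reflexivity).
    rewrite ofC_toC.
    replace (toC (f (Cadd z (ofC k))) - toC (f z) - toC L * k)%C with
      (k * ((toC (f (Cadd z (ofC k))) - toC (f z)) / k - toC L))%C by (field; auto).
    rewrite Cmod_mult. pose proof (Cmod_ge_0 k). rewrite Rmult_comm. apply Rmult_le_compat_r; lra.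
Qed.

Lemma Cnorm_ofC w : Cnorm (ofC w) = Cmod w.
Proof. rewrite Cnorm_toC, toC_ofC. reflexivity. Qed.

Lemma analytic_tr f : analytic_D f -> forall w, Cmod w < 1 -> exists L, Dq (lift f) w L.
Proof. intros H w hw. destruct (H (ofC w) ltac:(unfold inD; rewrite Cnorm_ofC; auto)) as [L HL].
  exists (toC L). rewrite <- (toC_ofC w) at 1. apply deriv_tr; auto. Qed.

Lemma deriv_tr' f df : (forall z, inD z -> is_cderiv f z (df z)) -> forall v, Cmod v < 1 -> Dq (lift f) v (lift df v).
Proof. intros H v hv. unfold lift at 2. rewrite <- (toC_ofC v) at 1. apply deriv_tr. apply H. unfold inD; rewrite Cnorm_ofC; auto. Qed.

Theorem theorem5
  (phi : Cplx -> Cplx) (B : nat -> Cplx)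
  (Hphi : has_series B phi) (HB0 : B O = Cone)
  (HB1 : 0 < Re (B 1%nat)) (HB1r : Im (B 1%nat) = 0) (HB2r : Im (B 2%nat) = 0)
  (a : nat -> Cplx) (f F df dF : Cplx -> Cplx)
  (Hsig : bi_univalent_with a f F)
  (Hdf : forall z, inD z -> is_cderiv f z (df z))
  (HdF : forall w, inD w -> is_cderiv F w (dF w))
  (Hstar : subordinate (starlike_quot f df) phi)
  (HR : subordinate dF phi) :
  Cnorm (a 2%nat) <= sqrt (5 * (Re (B 1%nat) + Rabs (Re (B 2%nat) - Re (B 1%nat)))) / 3 /\
  Cnorm (a 3%nat) <= 7 * (Re (B 1%nat) + Rabs (Re (B 2%nat) - Re (B 1%nat))) / 9.
Proof.
  destruct Hsig as [HS [ha0 [ha1 [Hunf [HanF [HuF [r [hr HFr]]]]]]]].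
  destruct Hstar as [w1 [Hw1a [Hw1in [Hw10 Hw1s]]]].
  destruct HR as [w2 [Hw2a [Hw2in [Hw20 Hw2s]]]].
  rewrite !Cnorm_toC.
  assert (HSa := series_tr a f HS).
  assert (ha0' : toC (a O) = C0) by (rewrite ha0; reflexivity).
  assert (ha1' : toC (a 1%nat) = C1) by (rewrite ha1; reflexivity).
  assert (f0 : f Czero = Czero).
  { pose proof (On_at0 1 _ (le_n 1) (tail _ _ 0 HSa)) as H0. cbv beta in H0. simpl Tp in H0. rewrite ha0' in H0.
    apply toC_inj. unfold lift in H0. change (ofC C0) with Czero in H0.
    replace (toC (f Czero)) with ((toC (f Czero) - C0) + C0)%C by ring. rewrite H0. apply C_eq; simpl; ring. }
  assert (F0 : F Czero = Czero).
  { destruct (HFr Czero ltac:(rewrite Cnorm_toC, toC_zero, Cmod_0; auto)) as [hin hff].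
    apply Hunf; auto. unfold inD; rewrite Cnorm_toC, toC_zero, Cmod_0; lra. rewrite hff, f0; reflexivity. }
  apply (mainC (lift phi) (fun j => toC (B j)) (Re (B 1%nat)) (Re (B 2%nat)) (fun j => toC (a j))
    (lift f) (lift F) (lift df) (lift dF) (lift (starlike_quot f df)) (lift w1) (lift w2) r).
  - apply series_tr; auto.
  - rewrite HB0; reflexivity.
  - unfold toC; rewrite HB1r; reflexivity.
  - auto.
  - unfold toC; rewrite HB2r; reflexivity.
  - auto.
  - auto.
  - auto.
  - apply deriv_tr'; auto.
  - apply deriv_tr'; auto.
  - auto.
  - intros w hw. unfold lift. rewrite ofC_toC. destruct (HFr (ofC w) ltac:(rewrite Cnorm_ofC; auto)) as [_ hff].
    rewrite hff. apply toC_ofC.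
  - unfold lift. change (ofC C0) with Czero. rewrite F0. reflexivity.
  - intros z hz hz0. unfold lift, starlike_quot. destruct (Ceq_dec (ofC z) Czero) as [e|e].
    + exfalso. apply hz0. rewrite <- (toC_ofC z), e. reflexivity.
    + rewrite toC_div, toC_mul, toC_ofC. reflexivity.
  - unfold lift, starlike_quot. change (ofC C0) with Czero. destruct (Ceq_dec Czero Czero) as [e|e]; [reflexivity|congruence].
  - apply analytic_tr; auto.
  - intros w hw. unfold lift. rewrite <- Cnorm_toC. apply Hw1in. unfold inD; rewrite Cnorm_ofC; auto.
  - unfold lift. change (ofC C0) with Czero. rewrite Hw10. reflexivity.
  - intros z hz. unfold lift. rewrite ofC_toC. rewrite Hw1s; auto. unfold inD; rewrite Cnorm_ofC; auto.
  - apply analytic_tr; auto.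
  - intros w hw. unfold lift. rewrite <- Cnorm_toC. apply Hw2in. unfold inD; rewrite Cnorm_ofC; auto.
  - unfold lift. change (ofC C0) with Czero. rewrite Hw20. reflexivity.
  - intros z hz. unfold lift. rewrite ofC_toC. rewrite Hw2s; auto. unfold inD; rewrite Cnorm_ofC; auto.
Qed.
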